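(* Let $a<0$, $b>0$, $k>0$, and let $M:\mathbb{R}^2\to\mathbb{R}^2$ be $C^2$ with $M(0)=0$ and $M'(0)=0$. For $\varepsilon>0$ consider the impacting system $$\begin{pmatrix}\dot x\\ \dot y\end{pmatrix}=\begin{pmatrix}ax-by\\ bx+ay\end{pmatrix}+M(x,y)\quad\text{if } y-\varepsilon<0,\qquad x\mapsto -k\varepsilon\ (\text{$y$ unchanged})\quad\text{if } y-\varepsilon=0.$$ If $$\frac{a}{b}\cdot\frac{3\pi}{2}-\frac{a}{b}\,\mathrm{arccot}(-k)+\frac12\ln(1+k^2)>\frac{a}{b}\Big(-\frac{\pi}{2}\Big)-\frac{a}{b}\,\mathrm{arccot}\Big(-\frac{a}{b}\Big)+\frac12\ln\Big(1+\frac{a^2}{b^2}\Big),$$ then for all sufficiently small $\varepsilon>0$ the system admits a finite-time stable limit cycle $(x_\varepsilon(t),y_\varepsilon(t))$ with exactly one impact per period, which shrinks to the origin as $\varepsilon\to0$.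
   Context: $\mathrm{arccot}$ takes values in $(0,\pi)$. A periodic orbit is finite-time stable if every trajectory starting in a sufficiently small neighborhood of it coincides with the periodic orbit (up to a time shift) after finite time. *)

(* Defs.v *)
From Stdlib Require Import Reals Lra.
Open Scope R_scope.

(* arccot with values in (0, PI) *)
Definition arccot (x : R) : R := PI / 2 - atan x.

Definition dist2 (p q : R * R) : R :=
  sqrt ((fst p - fst q) ^ 2 + (snd p - snd q) ^ 2).

Definition cont2 (g : R * R -> R) : Prop :=
  forall p e, 0 < e -> exists d, 0 < d /\
    forall q, dist2 q p < d -> Rabs (g q - g p) < e.

Definition has_partials (g gx gy : R * R -> R) : Prop :=
  (forall x y, derivable_pt_lim (fun u => g (u, y)) x (gx (x, y))) /\
  (forall x y, derivable_pt_lim (fun v => g (x, v)) y (gy (x, y))).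

Definition C2_fun (g : R * R -> R) : Prop :=
  exists gx gy gxx gxy gyx gyy : R * R -> R,
    has_partials g gx gy /\
    has_partials gx gxx gxy /\
    has_partials gy gyx gyy /\
    cont2 g /\ cont2 gx /\ cont2 gy /\
    cont2 gxx /\ cont2 gxy /\ cont2 gyx /\ cont2 gyy.

Definition C2_map (M : R * R -> R * R) : Prop :=
  C2_fun (fun p => fst (M p)) /\ C2_fun (fun p => snd (M p)).

Definition field (a b : R) (M : R * R -> R * R) (p : R * R) : R * R :=
  (a * fst p - b * snd p + fst (M p), b * fst p + a * snd p + snd (M p)).

Definition right_deriv (f : R -> R) (t l : R) : Prop :=
  forall e, 0 < e -> exists d, 0 < d /\
    forall h, 0 < h < d -> Rabs ((f (t + h) - f t) / h - l) < e.

Definition left_lim (f : R -> R) (t l : R) : Prop :=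
  forall e, 0 < e -> exists d, 0 < d /\
    forall s, t - d < s < t -> Rabs (f s - l) < e.

(* z : [0,oo) -> R^2 is a (forward, globally defined) solution of the
   impacting system: flow of [field] while y < eps; when y = eps the
   state is reset to x = -k eps (y unchanged).  Convention: the state at
   an impact instant is the post-impact state (right-continuity), the
   pre-impact state being the left limit. *)
Definition hybrid_sol (a b k : R) (M : R * R -> R * R) (eps : R)
  (z : R -> R * R) : Prop :=
  (forall t, 0 <= t -> snd (z t) <= eps) /\
  (forall t, 0 < t -> snd (z t) < eps ->
     derivable_pt_lim (fun s => fst (z s)) t (fst (field a b M (z t))) /\
     derivable_pt_lim (fun s => snd (z s)) t (snd (field a b M (z t)))) /\
  (forall t, 0 <= t ->
     right_deriv (fun s => fst (z s)) t (fst (field a b M (z t))) /\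
     right_deriv (fun s => snd (z s)) t (snd (field a b M (z t)))) /\
  (forall t, 0 <= t -> snd (z t) = eps -> fst (z t) = - k * eps) /\
  (forall t, 0 < t -> snd (z t) = eps ->
     exists xi, left_lim (fun s => fst (z s)) t xi /\
                left_lim (fun s => snd (z s)) t eps).

(* the solution z starts at the point p (if p lies on the impact line
   y = eps, the impact rule is applied at time 0) *)
Definition starts_at (k eps : R) (z : R -> R * R) (p : R * R) : Prop :=
  (snd p < eps /\ z 0 = p) \/ (snd p = eps /\ z 0 = (- k * eps, eps)).

Definition periodic_sol (z : R -> R * R) (T : R) : Prop :=
  0 < T /\ forall t, 0 <= t -> z (t + T) = z t.

Definition one_impact_per_period (eps : R) (z : R -> R * R) (T : R) : Prop :=
  exists tau, 0 <= tau < T /\ snd (z tau) = eps /\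
    forall s, 0 <= s < T -> snd (z s) = eps -> s = tau.

Definition ft_stable (a b k : R) (M : R * R -> R * R) (eps : R)
  (z : R -> R * R) : Prop :=
  exists delta, 0 < delta /\
    forall (p : R * R) (w : R -> R * R),
      (exists s, 0 <= s /\ dist2 p (z s) < delta) ->
      hybrid_sol a b k M eps w -> starts_at k eps w p ->
      exists t1 c, 0 <= t1 /\ 0 <= c /\
        forall t, t1 <= t -> w t = z (t + c).

Definition ft_stable_cycle_one_impact (a b k : R) (M : R * R -> R * R)
  (eps : R) (z : R -> R * R) (T : R) : Prop :=
  hybrid_sol a b k M eps z /\ periodic_sol z T /\
  one_impact_per_period eps z T /\ ft_stable a b k M eps z.

(* Main.v *)
From Stdlib Require Import Reals Lra Lia Classical ZArith ClassicalEpsilon.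
From Coquelicot Require Import Coquelicot.
Require Import Defs.
Open Scope R_scope.

Definition ctn (g : R -> R) (t : R) : Prop :=
  forall e, 0 < e -> exists d, 0 < d /\ forall s, Rabs (s - t) < d -> Rabs (g s - g t) < e.

Lemma ctn_continuous g t : ctn g t -> continuous g t.
Proof.
  intros H. apply continuity_pt_filterlim. apply continuity_pt_locally.
  intros eps. destruct (H eps (cond_pos eps)) as [d [Hd Hs]].
  exists (mkposreal d Hd). intros y Hy. apply Hs. exact Hy.
Qed.

Lemma continuous_ctn g t : continuous g t -> ctn g t.
Proof.
  intros H e He. apply (proj2 (continuity_pt_filterlim g t)) in H.
  rewrite continuity_pt_locally in H. destruct (H (mkposreal e He)) as [d Hd].
  exists d. split. apply cond_pos. intros s Hs. apply (Hd s). exact Hs.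
Qed.

Lemma RInt_deriv (g : R -> R) : (forall x, continuous g x) -> forall t, is_derive (fun t => RInt g 0 t) t (g t).
Proof.
  intros Hg t. apply is_derive_RInt with (a := 0).
  - apply filter_forall. intros b. apply (RInt_correct (V := R_CompleteNormedModule)). apply (ex_RInt_continuous (V := R_CompleteNormedModule)). intros; apply Hg.
  - apply Hg.
Qed.

Lemma ex_RInt_all (g : R -> R) : (forall x, continuous g x) -> forall a b, ex_RInt g a b.
Proof. intros Hg a b. apply (ex_RInt_continuous (V := R_CompleteNormedModule)). intros; apply Hg. Qed.

Lemma RInt_ctn (g : R -> R) : (forall x, continuous g x) -> forall t, ctn (fun t => RInt g 0 t) t.
Proof.
  intros Hg t. apply continuous_ctn. apply (ex_derive_continuous (K:=R_AbsRing) (V:=R_NormedModule)). eexists. apply RInt_deriv; auto.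
Qed.

Definition d1 (p q : R*R) := Rabs (fst p - fst q) + Rabs (snd p - snd q).
Definition Lipf (f : R*R -> R*R) K := forall u v, d1 (f u) (f v) <= K * d1 u v.
Definition ct2 (g : R -> R*R) t := ctn (fun s => fst (g s)) t /\ ctn (fun s => snd (g s)) t.

Lemma ct2_comp f K g t : 0 <= K -> Lipf f K -> ct2 g t -> ct2 (fun s => f (g s)) t.
Proof.
  intros HK Hf [H1 H2].
  assert (Hmain : forall e, 0 < e -> exists d, 0 < d /\ forall s, Rabs (s - t) < d -> d1 (f (g s)) (f (g t)) < e).
  { intros e He. set (e' := e / (2 * (K + 1))).
    assert (He' : 0 < e') by (unfold e'; apply Rdiv_lt_0_compat; lra).
    destruct (H1 e' He') as [d1' [Hd1 Hs1]]. destruct (H2 e' He') as [d2' [Hd2 Hs2]].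
    exists (Rmin d1' d2'). split. apply Rmin_pos; auto.
    intros s Hs. eapply Rle_lt_trans. apply Hf. unfold d1.
    assert (A1 : Rabs (fst (g s) - fst (g t)) < e') by (apply Hs1; eapply Rlt_le_trans; [exact Hs| apply Rmin_l]).
    assert (A2 : Rabs (snd (g s) - snd (g t)) < e') by (apply Hs2; eapply Rlt_le_trans; [exact Hs| apply Rmin_r]).
    assert (e' * (2 * (K+1)) = e) by (unfold e'; field; lra).
    nra. }
  split; intros e He; destruct (Hmain e He) as [d [Hd Hs]]; exists d; split; auto; intros s Hs';
   specialize (Hs s Hs'); unfold d1 in Hs; pose proof (Rabs_pos (fst (f (g s)) - fst (f (g t))));
   pose proof (Rabs_pos (snd (f (g s)) - snd (f (g t)))); lra.
Qed.

Lemma Rmax_lip a b : Rabs (Rmax 0 a - Rmax 0 b) <= Rabs (a - b).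
Proof. unfold Rmax; destruct (Rle_dec 0 a), (Rle_dec 0 b); unfold Rabs; repeat destruct Rcase_abs; lra. Qed.

Lemma ct2_max g t : (forall s, ct2 g s) -> ct2 (fun s => g (Rmax 0 s)) t.
Proof.
  intros Hg. destruct (Hg (Rmax 0 t)) as [H1 H2].
  split; intros e He; [destruct (H1 e He) as [d [Hd Hs]] | destruct (H2 e He) as [d [Hd Hs]]];
  exists d; (split; [auto|]); intros s Hs'; apply Hs; (eapply Rle_lt_trans; [apply Rmax_lip| exact Hs']).
Qed.

Fixpoint pic (f : R*R -> R*R) (p : R*R) (n : nat) (t : R) : R*R :=
  match n with
  | O => p
  | S n => (fst p + RInt (fun s => fst (f (pic f p n (Rmax 0 s)))) 0 t,
            snd p + RInt (fun s => snd (f (pic f p n (Rmax 0 s)))) 0 t)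
  end.

Lemma ctn_plus_const c g t : ctn g t -> ctn (fun s => c + g s) t.
Proof. intros H e He. destruct (H e He) as [d [Hd Hs]]. exists d; split; auto. intros s Hs'.
  replace (c + g s - (c + g t)) with (g s - g t) by ring. auto. Qed.

Lemma pic_ct2 f K p : 0 <= K -> Lipf f K -> forall n t, ct2 (pic f p n) t.
Proof.
  intros HK Hf n. induction n; intros t.
  - split; intros e He; exists 1; split; try lra; intros; simpl; unfold Rminus; rewrite Rplus_opp_r, Rabs_R0; auto.
  - assert (Hc : forall x, ct2 (fun s => f (pic f p n (Rmax 0 s))) x).
    { intros x. apply ct2_comp with K; auto. apply ct2_max. auto. }
    split; simpl; apply ctn_plus_const; apply RInt_ctn; intros x; apply ctn_continuous; apply Hc.
Qed.

Lemma ctn_plus g h t : ctn g t -> ctn h t -> ctn (fun s => g s + h s) t.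
Proof. intros H1 H2 e He. destruct (H1 (e/2)) as [d1' [Hd1 Hs1]]; try lra. destruct (H2 (e/2)) as [d2' [Hd2 Hs2]]; try lra.
  exists (Rmin d1' d2'); split. apply Rmin_pos; auto. intros s Hs.
  assert (A1 := Hs1 s ltac:(eapply Rlt_le_trans; [exact Hs|apply Rmin_l])).
  assert (A2 := Hs2 s ltac:(eapply Rlt_le_trans; [exact Hs|apply Rmin_r])).
  replace (g s + h s - (g t + h t)) with ((g s - g t) + (h s - h t)) by ring.
  eapply Rle_lt_trans. apply Rabs_triang. lra. Qed.

Lemma ctn_opp g t : ctn g t -> ctn (fun s => - g s) t.
Proof. intros H e He. destruct (H e He) as [d [Hd Hs]]. exists d; split; auto. intros s Hs'.
  replace (- g s - - g t) with (- (g s - g t)) by ring. rewrite Rabs_Ropp. auto. Qed.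

Lemma ctn_minus g h t : ctn g t -> ctn h t -> ctn (fun s => g s - h s) t.
Proof. intros; apply ctn_plus; auto; apply ctn_opp; auto. Qed.

Lemma ctn_abs g t : ctn g t -> ctn (fun s => Rabs (g s)) t.
Proof. intros H e He. destruct (H e He) as [d [Hd Hs]]. exists d; split; auto. intros s Hs'.
  eapply Rle_lt_trans. apply Rabs_triang_inv2. auto. Qed.

Lemma ctn_const c t : ctn (fun _ => c) t.
Proof. intros e He; exists 1; split; try lra; intros; unfold Rminus; rewrite Rplus_opp_r, Rabs_R0; auto. Qed.

Lemma ctn_mult g h t : ctn g t -> ctn h t -> ctn (fun s => g s * h s) t.
Proof. intros H1 H2. apply continuous_ctn. apply (continuous_mult (K:=R_AbsRing)); apply ctn_continuous; auto. Qed.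

Lemma RInt_minus_R (g h : R -> R) a b : ex_RInt g a b -> ex_RInt h a b ->
  @eq R (RInt (fun s => g s - h s) a b) (RInt g a b - RInt h a b).
Proof. intros. apply (RInt_minus (V:=R_CompleteNormedModule)); auto. Qed.

Lemma RInt_plus_R (g h : R -> R) a b : ex_RInt g a b -> ex_RInt h a b ->
  @eq R (RInt (fun s => g s + h s) a b) (RInt g a b + RInt h a b).
Proof. intros. apply (RInt_plus (V:=R_CompleteNormedModule)); auto. Qed.

Lemma RInt_const_R c a b : @eq R (RInt (fun _ => c) a b) ((b - a) * c).
Proof. rewrite (RInt_const (V:=R_CompleteNormedModule)). reflexivity. Qed.

Lemma RInt_exp_bound A K t : 0 < K -> 0 <= t ->
  @eq R (RInt (fun s => A * exp (2 * K * s)) 0 t) (A * (exp (2*K*t) - 1) / (2 * K)).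
Proof.
  intros HK Ht. apply is_RInt_unique.
  replace (A * (exp (2*K*t) - 1) / (2 * K)) with
    (minus (A * exp (2*K*t) / (2*K)) (A * exp (2*K*0) / (2*K))).
  2:{ rewrite Rmult_0_r, exp_0. unfold minus, plus, opp; simpl. field. lra. }
  apply (is_RInt_derive (V:=R_CompleteNormedModule) (fun s => A * exp (2*K*s) / (2*K))).
  - intros x _. auto_derive; auto. field. lra.
  - intros x _. apply ctn_continuous. apply ctn_mult. apply ctn_const.
    apply continuous_ctn. apply continuous_exp_comp. apply ctn_continuous. apply ctn_mult. apply ctn_const.
    intros e He; exists e; split; auto.
Qed.

Definition nrm1 (p : R*R) := Rabs (fst p) + Rabs (snd p).

Lemma pic_int_ctn f K p n : 0 <= K -> Lipf f K ->
  (forall x, ctn (fun s => fst (f (pic f p n (Rmax 0 s)))) x) /\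
  (forall x, ctn (fun s => snd (f (pic f p n (Rmax 0 s)))) x).
Proof.
  intros HK Hf. split; intros x; destruct (ct2_comp f K (fun s => pic f p n (Rmax 0 s)) x HK Hf) as [A B];
  auto; apply ct2_max; apply pic_ct2 with K; auto.
Qed.

Lemma pic_bound f K p : 0 < K -> Lipf f K -> forall n t, 0 <= t ->
  d1 (pic f p (S n) t) (pic f p n t) <= nrm1 (f p) / (2*K) * (/2)^n * exp (2*K*t).
Proof.
  intros HK Hf n. induction n; intros t Ht.
  - simpl pic. unfold d1, nrm1; simpl.
    rewrite !RInt_const_R. replace (fst p + (t - 0) * fst (f p) - fst p) with (t * fst (f p)) by ring.
    replace (snd p + (t - 0) * snd (f p) - snd p) with (t * snd (f p)) by ring.
    rewrite !Rabs_mult, (Rabs_right t) by lra.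
    assert (E : 2*K*t <= exp (2*K*t)).
    { destruct (Req_dec t 0). subst. rewrite Rmult_0_r, exp_0. lra. pose proof (exp_ineq1 (2*K*t)). 
      assert (2*K*t <> 0). { apply Rmult_integral_contrapositive; split; lra. } specialize (H0 H1). lra. }
    pose proof (Rabs_pos (fst (f p))). pose proof (Rabs_pos (snd (f p))).
    apply Rmult_le_reg_l with (2*K). lra.
    replace (2 * K * ((Rabs (fst (f p)) + Rabs (snd (f p))) / (2 * K) * 1 * exp (2 * K * t))) with
      ((Rabs (fst (f p)) + Rabs (snd (f p))) * exp (2 * K * t)) by (field; lra).
    nra.
  - destruct (pic_int_ctn f K p (S n)) as [A1 A2]; try lra; auto.
    destruct (pic_int_ctn f K p n) as [B1 B2]; try lra; auto.
    assert (EA1 := fun a b => ex_RInt_all _ (fun x => ctn_continuous _ _ (A1 x)) a b).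
    assert (EA2 := fun a b => ex_RInt_all _ (fun x => ctn_continuous _ _ (A2 x)) a b).
    assert (EB1 := fun a b => ex_RInt_all _ (fun x => ctn_continuous _ _ (B1 x)) a b).
    assert (EB2 := fun a b => ex_RInt_all _ (fun x => ctn_continuous _ _ (B2 x)) a b).
    set (g1 := fun s => fst (f (pic f p (S n) (Rmax 0 s)))) in *.
    set (g2 := fun s => snd (f (pic f p (S n) (Rmax 0 s)))) in *.
    set (h1 := fun s => fst (f (pic f p n (Rmax 0 s)))) in *.
    set (h2 := fun s => snd (f (pic f p n (Rmax 0 s)))) in *.
    assert (D1 : forall x, ctn (fun s => g1 s - h1 s) x) by (intros; apply ctn_minus; auto).
    assert (D2 : forall x, ctn (fun s => g2 s - h2 s) x) by (intros; apply ctn_minus; auto).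
    assert (ED1 := fun a b => ex_RInt_all _ (fun x => ctn_continuous _ _ (D1 x)) a b).
    assert (ED2 := fun a b => ex_RInt_all _ (fun x => ctn_continuous _ _ (D2 x)) a b).
    assert (AD1 : forall x, ctn (fun s => Rabs (g1 s - h1 s)) x) by (intros; apply ctn_abs; auto).
    assert (AD2 : forall x, ctn (fun s => Rabs (g2 s - h2 s)) x) by (intros; apply ctn_abs; auto).
    assert (EAD1 := fun a b => ex_RInt_all _ (fun x => ctn_continuous _ _ (AD1 x)) a b).
    assert (EAD2 := fun a b => ex_RInt_all _ (fun x => ctn_continuous _ _ (AD2 x)) a b).
    assert (ES : forall a b, ex_RInt (fun s => Rabs (g1 s - h1 s) + Rabs (g2 s - h2 s)) a b).
    { intros; apply ex_RInt_all; intros; apply ctn_continuous; apply ctn_plus; auto. }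
    unfold d1. change (fst (pic f p (S (S n)) t)) with (fst p + RInt g1 0 t).
    change (fst (pic f p (S n) t)) with (fst p + RInt h1 0 t).
    change (snd (pic f p (S (S n)) t)) with (snd p + RInt g2 0 t).
    change (snd (pic f p (S n) t)) with (snd p + RInt h2 0 t).
    assert (X1 : @eq R (fst p + RInt g1 0 t - (fst p + RInt h1 0 t)) (RInt (fun s => g1 s - h1 s) 0 t))
      by (rewrite RInt_minus_R; [ring|apply EA1|apply EB1]).
    assert (X2 : @eq R (snd p + RInt g2 0 t - (snd p + RInt h2 0 t)) (RInt (fun s => g2 s - h2 s) 0 t))
      by (rewrite RInt_minus_R; [ring|apply EA2|apply EB2]).
    rewrite X1, X2.
    eapply Rle_trans. apply Rplus_le_compat; apply abs_RInt_le; auto.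
    rewrite <- RInt_plus_R; auto.
    set (c := nrm1 (f p) / (2 * K) * (/ 2) ^ n).
    eapply Rle_trans. apply RInt_le with (g := fun s => K * c * exp (2*K*s)); auto.
    { apply ex_RInt_all; intros; apply ctn_continuous. apply ctn_mult. apply ctn_const.
      apply continuous_ctn. apply continuous_exp_comp. apply ctn_continuous. apply ctn_mult. apply ctn_const.
      intros e He; exists e; split; auto. }
    { intros x Hx. unfold g1, g2, h1, h2. rewrite Rmax_right by lra.
      eapply Rle_trans. apply Hf. rewrite Rmult_assoc. apply Rmult_le_compat_l. lra.
      apply IHn. lra. }
    rewrite RInt_exp_bound; auto.
    unfold c. simpl pow.
    assert (0 <= nrm1 (f p)) by (unfold nrm1; pose proof (Rabs_pos (fst (f p))); pose proof (Rabs_pos (snd (f p))); lra).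
    assert (0 < (/2)^n) by (apply pow_lt; lra).
    assert (0 < exp (2*K*t)) by apply exp_pos.
    apply Rmult_le_reg_l with (2*K). lra.
    field_simplify; try lra.
    assert (0 <= nrm1 (f p) * (/2)^n) by (apply Rmult_le_pos; lra).
    nra.
Qed.

Lemma d1_triang a b c : d1 a c <= d1 a b + d1 b c.
Proof. unfold d1.
  pose proof (Rabs_triang (fst a - fst b) (fst b - fst c)).
  pose proof (Rabs_triang (snd a - snd b) (snd b - snd c)).
  replace (fst a - fst c) with (fst a - fst b + (fst b - fst c)) by ring.
  replace (snd a - snd c) with (snd a - snd b + (snd b - snd c)) by ring. lra. Qed.

Lemma d1_sym a b : d1 a b = d1 b a.
Proof. unfold d1. rewrite (Rabs_minus_sym (fst a)), (Rabs_minus_sym (snd a)). auto. Qed.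

Lemma d1_pos a b : 0 <= d1 a b.
Proof. unfold d1. pose proof (Rabs_pos (fst a - fst b)). pose proof (Rabs_pos (snd a - snd b)). lra. Qed.

Lemma pic_cauchy f K p : 0 < K -> Lipf f K -> forall n m t, 0 <= t -> (n <= m)%nat ->
  d1 (pic f p m t) (pic f p n t) <=
  2 * (nrm1 (f p) / (2*K)) * exp (2*K*t) * ((/2)^n - (/2)^m).
Proof.
  intros HK Hf n m t Ht Hnm. induction Hnm.
  - unfold d1. rewrite !Rminus_diag, Rabs_R0. lra.
  - eapply Rle_trans. apply d1_triang with (b := pic f p m t).
    pose proof (pic_bound f K p HK Hf m t Ht). simpl pow. lra.
Qed.

Lemma geom_small c : 0 < c -> exists N, forall n, (n >= N)%nat -> (/2)^n < c.
Proof.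
  intros Hc. destruct (pow_lt_1_zero (/2)) with (y := c) as [N HN]; auto.
  rewrite Rabs_right; lra. exists N. intros n Hn. specialize (HN n Hn).
  rewrite Rabs_right in HN; auto. apply Rle_ge, pow_le. lra.
Qed.

Lemma nrm1_pos p : 0 <= nrm1 p.
Proof. unfold nrm1. pose proof (Rabs_pos (fst p)). pose proof (Rabs_pos (snd p)). lra. Qed.

Definition psi f p t : R*R :=
  (real (Lim_seq (fun n => fst (pic f p n (Rmax 0 t)))),
   real (Lim_seq (fun n => snd (pic f p n (Rmax 0 t))))).

Lemma cauchy_lim (u : nat -> R) : Cauchy_crit u -> Un_cv u (real (Lim_seq u)).
Proof.
  intros H. destruct (Rcomplete.R_complete u H) as [l Hl].
  assert (Hl' : is_lim_seq u l) by (apply is_lim_seq_Reals; auto).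
  rewrite (is_lim_seq_unique _ _ Hl'). simpl. auto.
Qed.

Lemma lim_le2 (u v : nat -> R) l1 l2 c1 c2 B n : Un_cv u l1 -> Un_cv v l2 ->
  (forall m, (m >= n)%nat -> Rabs (u m - c1) + Rabs (v m - c2) <= B) ->
  Rabs (l1 - c1) + Rabs (l2 - c2) <= B.
Proof.
  intros Hu Hv Hb. destruct (Rle_dec (Rabs (l1 - c1) + Rabs (l2 - c2)) B) as [|Hn]; auto.
  exfalso. set (e := (Rabs (l1 - c1) + Rabs (l2 - c2) - B) / 2).
  assert (He : 0 < e) by (unfold e; lra).
  destruct (Hu e He) as [N1 HN1]. destruct (Hv e He) as [N2 HN2].
  set (m := (N1 + N2 + n)%nat).
  specialize (HN1 m ltac:(unfold m; lia)). specialize (HN2 m ltac:(unfold m; lia)).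
  specialize (Hb m ltac:(unfold m; lia)). unfold Rdist in *.
  pose proof (Rabs_triang (u m - c1) (l1 - u m)). pose proof (Rabs_triang (v m - c2) (l2 - v m)).
  replace (u m - c1 + (l1 - u m)) with (l1 - c1) in H by ring.
  replace (v m - c2 + (l2 - v m)) with (l2 - c2) in H0 by ring.
  rewrite Rabs_minus_sym in HN1, HN2. unfold e in *. lra.
Qed.

Lemma psi_conv f K p : 0 < K -> Lipf f K -> forall t,
  Un_cv (fun n => fst (pic f p n (Rmax 0 t))) (fst (psi f p t)) /\
  Un_cv (fun n => snd (pic f p n (Rmax 0 t))) (snd (psi f p t)).
Proof.
  intros HK Hf t. set (t' := Rmax 0 t). assert (Ht' : 0 <= t') by apply Rmax_l.
  set (B := 2 * (nrm1 (f p) / (2*K)) * exp (2*K*t')).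
  assert (HB : 0 <= B). { unfold B. pose proof (nrm1_pos (f p)). pose proof (exp_pos (2*K*t')).
    apply Rmult_le_pos; try lra. apply Rmult_le_pos; try lra. apply Rdiv_le_0_compat; lra. }
  assert (Hc : forall e, 0 < e -> exists N, forall n m, (n >= N)%nat -> (m >= N)%nat ->
     d1 (pic f p n t') (pic f p m t') < e).
  { intros e He. destruct (geom_small (e / (B + 1))) as [N HN].
    apply Rdiv_lt_0_compat; lra. exists N. intros n m Hn Hm.
    assert (Hmn : forall a b, (a >= N)%nat -> (b >= N)%nat -> (a <= b)%nat -> d1 (pic f p b t') (pic f p a t') < e).
    { intros a b Ha Hb Hab. eapply Rle_lt_trans. apply (pic_cauchy f K p); auto. fold B.
      specialize (HN a Ha). assert (0 < (/2)^b) by (apply pow_lt; lra).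
      assert (B * ((/2)^a) <= B * (e / (B+1))) by (apply Rmult_le_compat_l; lra).
      assert (B * (e / (B+1)) < e). { apply Rmult_lt_reg_r with (B+1). lra. 
        replace (B * (e / (B + 1)) * (B + 1)) with (B * e) by (field; lra). nra. }
      assert (0 <= B * (/2)^b) by (apply Rmult_le_pos; lra). rewrite Rmult_minus_distr_l. lra. }
    destruct (Nat.le_ge_cases n m). rewrite d1_sym. apply Hmn; auto. apply Hmn; auto. }
  split; apply cauchy_lim; intros e He; destruct (Hc e He) as [N HN]; exists N; intros n m Hn Hm;
  specialize (HN n m Hn Hm); unfold d1 in HN; unfold Rdist;
  pose proof (Rabs_pos (fst (pic f p n t') - fst (pic f p m t')));
  pose proof (Rabs_pos (snd (pic f p n t') - snd (pic f p m t'))); lra.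
Qed.

Lemma psi_bound f K p : 0 < K -> Lipf f K -> forall n t,
  d1 (psi f p t) (pic f p n (Rmax 0 t)) <= 2 * (nrm1 (f p) / (2*K)) * exp (2*K*Rmax 0 t) * (/2)^n.
Proof.
  intros HK Hf n t. destruct (psi_conv f K p HK Hf t) as [H1 H2].
  unfold d1. apply lim_le2 with (u := fun m => fst (pic f p m (Rmax 0 t))) (v := fun m => snd (pic f p m (Rmax 0 t))) (n := n); auto.
  intros m Hm. pose proof (pic_cauchy f K p HK Hf n m (Rmax 0 t) (Rmax_l _ _) Hm).
  unfold d1 in H. assert (0 <= (/2)^m) by (apply pow_le; lra).
  assert (0 <= 2 * (nrm1 (f p) / (2 * K)) * exp (2 * K * Rmax 0 t)).
  { pose proof (nrm1_pos (f p)). pose proof (exp_pos (2*K*Rmax 0 t)).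
    apply Rmult_le_pos; try lra. apply Rmult_le_pos; try lra. apply Rdiv_le_0_compat; lra. }
  nra.
Qed.

Lemma psi_max f p t : psi f p (Rmax 0 t) = psi f p t.
Proof. unfold psi. replace (Rmax 0 (Rmax 0 t)) with (Rmax 0 t). auto.
  symmetry; apply Rmax_right; apply Rmax_l. Qed.

Lemma exp_le_mono x y : x <= y -> exp x <= exp y.
Proof. intros H. destruct (Rle_lt_or_eq_dec _ _ H). left; apply exp_increasing; auto. subst; lra. Qed.

Lemma ct2_d1 g t : ct2 g t -> forall e, 0 < e -> exists d, 0 < d /\ forall s, Rabs (s - t) < d -> d1 (g s) (g t) < e.
Proof.
  intros [H1 H2] e He. destruct (H1 (e/2)) as [a [Ha Hsa]]; try lra. destruct (H2 (e/2)) as [b [Hb Hsb]]; try lra.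
  exists (Rmin a b). split. apply Rmin_pos; auto. intros s Hs. unfold d1.
  assert (A1 := Hsa s ltac:(eapply Rlt_le_trans; [exact Hs|apply Rmin_l])).
  assert (A2 := Hsb s ltac:(eapply Rlt_le_trans; [exact Hs|apply Rmin_r])). lra.
Qed.

Lemma d1_ct2 g t : (forall e, 0 < e -> exists d, 0 < d /\ forall s, Rabs (s - t) < d -> d1 (g s) (g t) < e) -> ct2 g t.
Proof.
  intros H. split; intros e He; destruct (H e He) as [d [Hd Hs]]; exists d; split; auto; intros s Hs';
  specialize (Hs s Hs'); unfold d1 in Hs;
  pose proof (Rabs_pos (fst (g s) - fst (g t))); pose proof (Rabs_pos (snd (g s) - snd (g t))); lra.
Qed.

Lemma psi_ct2 f K p : 0 < K -> Lipf f K -> forall t, ct2 (psi f p) t.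
Proof.
  intros HK Hf t.
  assert (Hmain : forall e, 0 < e -> exists d, 0 < d /\ forall s, Rabs (s - t) < d -> d1 (psi f p s) (psi f p t) < e).
  { intros e He.
    set (B := 2 * (nrm1 (f p) / (2*K)) * exp (2*K*(Rabs t + 1))).
    assert (HB : 0 <= B). { unfold B. pose proof (nrm1_pos (f p)). pose proof (exp_pos (2*K*(Rabs t + 1))).
      apply Rmult_le_pos; try lra. apply Rmult_le_pos; try lra. apply Rdiv_le_0_compat; lra. }
    destruct (geom_small (e / 3 / (B + 1))) as [n Hn]. apply Rdiv_lt_0_compat; lra.
    specialize (Hn n (Nat.le_refl n)).
    assert (HBn : B * (/2)^n < e/3). { assert (0 < (/2)^n) by (apply pow_lt; lra).
      apply Rle_lt_trans with (B * (e/3/(B+1))). apply Rmult_le_compat_l; lra.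
      apply Rmult_lt_reg_r with (B+1). lra. replace (B * (e / 3 / (B + 1)) * (B + 1)) with (B * (e/3)) by (field; lra). nra. }
    assert (Hbd : forall s, Rabs (s - t) < 1 -> d1 (psi f p s) (pic f p n (Rmax 0 s)) <= B * (/2)^n).
    { intros s Hs. eapply Rle_trans. apply (psi_bound f K p HK Hf). unfold B.
      assert (0 <= (/2)^n) by (apply pow_le; lra).
      apply Rmult_le_compat_r; auto. apply Rmult_le_compat_l.
      apply Rmult_le_pos; try lra. apply Rdiv_le_0_compat; try lra. apply nrm1_pos.
      apply exp_le_mono. apply Rmult_le_compat_l. lra.
      unfold Rmax; destruct (Rle_dec 0 s). 
      - pose proof (Rabs_triang_inv s t) as T1. pose proof (Rle_abs t) as T2.
        rewrite (Rabs_right s) in T1 by lra. lra.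
      - pose proof (Rabs_pos t). lra. }
    assert (Hct := ct2_d1 _ t (ct2_max (pic f p n) t (pic_ct2 f K p (Rlt_le _ _ HK) Hf n)) (e/3) ltac:(lra)).
    destruct Hct as [d [Hd Hsd]].
    exists (Rmin d 1). split. apply Rmin_pos; lra. intros s Hs.
    assert (Hs1 : Rabs (s - t) < 1) by (eapply Rlt_le_trans; [exact Hs|apply Rmin_r]).
    assert (Hsd' := Hsd s ltac:(eapply Rlt_le_trans; [exact Hs|apply Rmin_l])).
    assert (Q1 := Hbd s Hs1). assert (Q2 := Hbd t ltac:(rewrite Rminus_diag, Rabs_R0; lra)).
    rewrite d1_sym in Q2.
    pose proof (d1_triang (psi f p s) (pic f p n (Rmax 0 s)) (psi f p t)).
    pose proof (d1_triang (pic f p n (Rmax 0 s)) (pic f p n (Rmax 0 t)) (psi f p t)). lra. }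
  apply d1_ct2. auto.
Qed.

Lemma cv_shift (u : nat -> R) l : Un_cv u l -> Un_cv (fun n => u (S n)) l.
Proof. intros H e He. destruct (H e He) as [N HN]. exists N. intros n Hn. apply HN. lia. Qed.

Lemma psi_int f K p : 0 < K -> Lipf f K -> forall t, 0 <= t ->
  fst (psi f p t) = fst p + RInt (fun s => fst (f (psi f p (Rmax 0 s)))) 0 t /\
  snd (psi f p t) = snd p + RInt (fun s => snd (f (psi f p (Rmax 0 s)))) 0 t.
Proof.
  intros HK Hf t Ht.
  assert (Hc : forall x, ct2 (fun s => f (psi f p (Rmax 0 s))) x).
  { intros x. apply ct2_comp with K; try lra; auto. apply ct2_max. intros; apply psi_ct2 with K; auto. }
  destruct (psi_conv f K p HK Hf t) as [C1 C2]. rewrite Rmax_right in C1, C2 by lra.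
  set (B := 2 * (nrm1 (f p) / (2*K)) * exp (2*K*t)).
  assert (HB : 0 <= B). { unfold B. pose proof (nrm1_pos (f p)). pose proof (exp_pos (2*K*t)).
      apply Rmult_le_pos; try lra. apply Rmult_le_pos; try lra. apply Rdiv_le_0_compat; lra. }
  assert (Hpt : forall n s, 0 <= s <= t -> d1 (f (pic f p n (Rmax 0 s))) (f (psi f p (Rmax 0 s))) <= K * (B * (/2)^n)).
  { intros n s Hs. eapply Rle_trans. apply Hf. apply Rmult_le_compat_l. lra.
    rewrite d1_sym. rewrite (psi_max f p s). eapply Rle_trans. apply (psi_bound f K p HK Hf).
    unfold B. rewrite (Rmax_right 0 s) by lra. apply Rmult_le_compat_r. apply pow_le; lra.
    apply Rmult_le_compat_l. apply Rmult_le_pos; try lra. apply Rdiv_le_0_compat; try lra. apply nrm1_pos.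
    apply exp_le_mono. apply Rmult_le_compat_l; lra. }
  assert (Hcv : forall (G : R*R -> R) (Gproj : forall u v, Rabs (G u - G v) <= d1 u v)
     (Hcn : forall n x, ctn (fun s => G (f (pic f p n (Rmax 0 s)))) x)
     (HcG : forall x, ctn (fun s => G (f (psi f p (Rmax 0 s)))) x),
     Un_cv (fun n => G p + RInt (fun s => G (f (pic f p n (Rmax 0 s)))) 0 t)
           (G p + RInt (fun s => G (f (psi f p (Rmax 0 s)))) 0 t)).
  { intros G Gproj Hcn HcG e He.
    destruct (geom_small (e / (t * K * B + 1))) as [N HN]. apply Rdiv_lt_0_compat; try lra.
    assert (0 <= t * K * B) by (apply Rmult_le_pos; try lra; apply Rmult_le_pos; lra). lra.
    exists N. intros n Hn. unfold Rdist.
    assert (XX : @eq R (G p + RInt (fun s => G (f (pic f p n (Rmax 0 s)))) 0 t -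
       (G p + RInt (fun s => G (f (psi f p (Rmax 0 s)))) 0 t))
      (RInt (fun s => G (f (pic f p n (Rmax 0 s))) - G (f (psi f p (Rmax 0 s)))) 0 t)).
    { rewrite RInt_minus_R. ring. apply ex_RInt_all; intros; apply ctn_continuous; auto.
        apply ex_RInt_all; intros; apply ctn_continuous; auto. }
    rewrite XX.
    eapply Rle_lt_trans. apply abs_RInt_le_const with (M := K * (B * (/2)^n)); auto.
    apply ex_RInt_all; intros; apply ctn_continuous; apply ctn_minus; auto.
    intros s Hs. eapply Rle_trans. apply Gproj. apply Hpt; auto.
    specialize (HN n Hn). assert (0 <= t * K * B) by (apply Rmult_le_pos; try lra; apply Rmult_le_pos; lra).
    assert (0 < (/2)^n) by (apply pow_lt; lra).
    replace ((t - 0) * (K * (B * (/ 2) ^ n))) with ((t * K * B) * (/2)^n) by ring.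
    apply Rle_lt_trans with ((t*K*B) * (e / (t * K * B + 1))). apply Rmult_le_compat_l; lra.
    apply Rmult_lt_reg_r with (t*K*B+1). lra. replace (t * K * B * (e / (t * K * B + 1)) * (t * K * B + 1)) with (t*K*B*e) by (field; lra). nra. }
  split.
  - apply (UL_sequence (fun n => fst (pic f p (S n) t))). apply (cv_shift (fun n => fst (pic f p n t))); auto.
    apply (Hcv (fun u => fst u)).
    + intros u v. unfold d1. pose proof (Rabs_pos (snd u - snd v)). lra.
    + intros n x. destruct (ct2_comp f K (fun s => pic f p n (Rmax 0 s)) x ltac:(lra) Hf) as [A _]; auto.
      apply ct2_max. apply pic_ct2 with K; auto; lra.
    + intros x; apply Hc.
  - apply (UL_sequence (fun n => snd (pic f p (S n) t))). apply (cv_shift (fun n => snd (pic f p n t))); auto.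
    apply (Hcv (fun u => snd u)).
    + intros u v. unfold d1. pose proof (Rabs_pos (fst u - fst v)). lra.
    + intros n x. destruct (ct2_comp f K (fun s => pic f p n (Rmax 0 s)) x ltac:(lra) Hf) as [_ A]; auto.
      apply ct2_max. apply pic_ct2 with K; auto; lra.
    + intros x; apply Hc.
Qed.

Theorem flow_exists f K p : 0 < K -> Lipf f K -> exists phi : R -> R*R, phi 0 = p /\
  forall t, 0 <= t -> derivable_pt_lim (fun s => fst (phi s)) t (fst (f (phi t))) /\
                      derivable_pt_lim (fun s => snd (phi s)) t (snd (f (phi t))).
Proof.
  intros HK Hf.
  assert (Hc : forall x, ct2 (fun s => f (psi f p (Rmax 0 s))) x).
  { intros x. apply ct2_comp with K; try lra; auto. apply ct2_max. intros; apply psi_ct2 with K; auto. }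
  exists (fun t => (fst p + RInt (fun s => fst (f (psi f p (Rmax 0 s)))) 0 t,
                    snd p + RInt (fun s => snd (f (psi f p (Rmax 0 s)))) 0 t)).
  split.
  - rewrite !(RInt_point (V:=R_CompleteNormedModule)). unfold zero; simpl. rewrite !Rplus_0_r. destruct p; auto.
  - intros t Ht. simpl.
    destruct (psi_int f K p HK Hf t Ht) as [E1 E2].
    assert (Ep : psi f p (Rmax 0 t) = (fst p + RInt (fun s => fst (f (psi f p (Rmax 0 s)))) 0 t,
          snd p + RInt (fun s => snd (f (psi f p (Rmax 0 s)))) 0 t)).
    { rewrite psi_max. rewrite <- E1, <- E2. destruct (psi f p t); auto. }
    rewrite <- Ep.
    destruct (Hc t) as [Hc1 Hc2].
    assert (D1 : derivable_pt_lim (fun s => RInt (fun s => fst (f (psi f p (Rmax 0 s)))) 0 s) t (fst (f (psi f p (Rmax 0 t))))).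
    { apply is_derive_Reals. apply (RInt_deriv (fun s => fst (f (psi f p (Rmax 0 s))))). intros x; apply ctn_continuous; apply Hc. }
    assert (D2 : derivable_pt_lim (fun s => RInt (fun s => snd (f (psi f p (Rmax 0 s)))) 0 s) t (snd (f (psi f p (Rmax 0 t))))).
    { apply is_derive_Reals. apply (RInt_deriv (fun s => snd (f (psi f p (Rmax 0 s))))). intros x; apply ctn_continuous; apply Hc. }
    split.
    + assert (H := derivable_pt_lim_plus _ _ t 0 _ (derivable_pt_lim_const (fst p) t) D1). rewrite Rplus_0_l in H. exact H.
    + assert (H := derivable_pt_lim_plus _ _ t 0 _ (derivable_pt_lim_const (snd p) t) D2). rewrite Rplus_0_l in H. exact H.
Qed.

Lemma nonincr (g : R -> R) a b : a < b ->
  (forall s, a <= s <= b -> exists l, derivable_pt_lim g s l /\ l <= 0) -> g b <= g a.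
Proof.
  intros Hab Hd.
  destruct (MVT_gen g a b (Derive g)) as [c [Hc E]].
  - intros x Hx. rewrite Rmin_left, Rmax_right in Hx by lra.
    destruct (Hd x ltac:(lra)) as [l [Hl _]]. apply Derive_correct. exists l. apply is_derive_Reals. auto.
  - intros x Hx. rewrite Rmin_left, Rmax_right in Hx by lra.
    destruct (Hd x ltac:(lra)) as [l [Hl _]]. apply derivable_continuous_pt. exists l. auto.
  - rewrite Rmin_left, Rmax_right in Hc by lra. simpl in E.
    destruct (Hd c Hc) as [l [Hl Hl0]].
    rewrite (is_derive_unique g c l) in E by (apply is_derive_Reals; auto).
    assert (l * (b - a) <= 0) by nra. lra.
Qed.

Definition rcont (N : R -> R) t0 := forall e, 0 < e -> exists d, 0 < d /\ forall h, 0 < h < d -> Rabs (N (t0 + h) - N t0) < e.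

Lemma gron (N : R -> R) c t0 t1 : 0 <= c -> t0 < t1 ->
  (forall t, t0 < t < t1 -> 0 <= N t /\ exists l, derivable_pt_lim N t l /\ l <= c * N t) ->
  rcont N t0 ->
  forall t, t0 < t < t1 -> N t <= exp (c * (t - t0)) * N t0.
Proof.
  intros Hc Ht01 Hd Hr t Ht.
  assert (Hmono : forall h, 0 < h < t - t0 -> N t <= exp (c * (t - (t0 + h))) * N (t0 + h)).
  { intros h Hh. set (g := fun s => exp (- c * s) * N s).
    assert (Hg : g t <= g (t0 + h)).
    { apply nonincr. lra. intros s Hs. destruct (Hd s ltac:(lra)) as [HN [l [Hl Hle]]].
      exists ((- c * exp (- c * s)) * N s + exp (- c * s) * l). split.
      - unfold g. apply (derivable_pt_lim_mult (fun s => exp (- c * s)) N s). 2: auto.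
        replace (- c * exp (- c * s)) with (exp (- c * s) * (- c * 1)) by ring.
        apply (derivable_pt_lim_comp (fun s => - c * s) exp). 
        replace (- c * 1) with (0 * s + - c * 1) by ring.
        apply (derivable_pt_lim_mult (fun _ => - c) (fun s => s)). apply derivable_pt_lim_const. apply derivable_pt_lim_id.
        apply derivable_pt_lim_exp.
      - pose proof (exp_pos (- c * s)). nra. }
    unfold g in Hg.
    assert (E : exp (c * (t - (t0 + h))) = exp (c * t) * exp (- c * (t0 + h))).
    { rewrite <- exp_plus. f_equal. ring. }
    rewrite E. apply Rmult_le_reg_l with (exp (- c * t)). apply exp_pos.
    replace (exp (- c * t) * (exp (c * t) * exp (- c * (t0 + h)) * N (t0 + h))) with
      ((exp (- c * t) * exp (c * t)) * (exp (- c * (t0 + h)) * N (t0 + h))) by ring.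
    rewrite <- exp_plus. replace (- c * t + c * t) with 0 by ring. rewrite exp_0. lra. }
  destruct (Rle_dec (N t) (exp (c * (t - t0)) * N t0)) as [|Hn]; auto. exfalso.
  apply Rnot_le_lt in Hn.
  set (E := exp (c * (t - t0))). assert (HE : 0 < E) by apply exp_pos. assert (Hn2 : E * N t0 < N t) by (unfold E; lra).
  set (gap := N t - E * N t0).
  destruct (Hr (gap / (2 * E))) as [d [Hd0 Hdh]]. unfold gap. apply Rdiv_lt_0_compat; lra.
  set (h := Rmin (d/2) ((t - t0)/2)).
  assert (Hh : 0 < h < t - t0). { unfold h. split. apply Rmin_pos; lra. pose proof (Rmin_r (d/2) ((t-t0)/2)). lra. }
  assert (Hhd : 0 < h < d). { split. lra. unfold h. pose proof (Rmin_l (d/2) ((t-t0)/2)). lra. }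
  specialize (Hmono h Hh). specialize (Hdh h Hhd).
  destruct (Hd (t0 + h) ltac:(lra)) as [HNh _].
  assert (exp (c * (t - (t0 + h))) <= E). { unfold E. destruct (Req_dec c 0). subst; rewrite !Rmult_0_l; lra.
    left; apply exp_increasing. apply Rmult_lt_compat_l; lra. }
  assert (N (t0 + h) < N t0 + gap / (2 * E)). { pose proof (Rle_abs (N (t0 + h) - N t0)). lra. }
  assert (N t <= E * N (t0 + h)). { eapply Rle_trans. apply Hmono. apply Rmult_le_compat_r; lra. }
  assert (E * N (t0 + h) < E * (N t0 + gap / (2 * E))) by (apply Rmult_lt_compat_l; lra).
  assert (E * (N t0 + gap / (2 * E)) = E * N t0 + gap / 2) by (field; lra).
  unfold gap in *. lra.
Qed.

Definition sqd (p q : R*R) := (fst p - fst q) * (fst p - fst q) + (snd p - snd q) * (snd p - snd q).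

Lemma sqd_pos p q : 0 <= sqd p q.
Proof. unfold sqd. pose proof (Rle_0_sqr (fst p - fst q)). pose proof (Rle_0_sqr (snd p - snd q)). unfold Rsqr in *. lra. Qed.

Lemma sqd_deriv (u v : R -> R*R) t ux uy vx vy :
  derivable_pt_lim (fun s => fst (u s)) t ux -> derivable_pt_lim (fun s => snd (u s)) t uy ->
  derivable_pt_lim (fun s => fst (v s)) t vx -> derivable_pt_lim (fun s => snd (v s)) t vy ->
  derivable_pt_lim (fun s => sqd (u s) (v s)) t
    (2 * ((fst (u t) - fst (v t)) * (ux - vx) + (snd (u t) - snd (v t)) * (uy - vy))).
Proof.
  intros H1 H2 H3 H4. unfold sqd.
  assert (A := derivable_pt_lim_minus _ _ t _ _ H1 H3).
  assert (B := derivable_pt_lim_minus _ _ t _ _ H2 H4).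
  assert (A2 := derivable_pt_lim_mult _ _ t _ _ A A).
  assert (B2 := derivable_pt_lim_mult _ _ t _ _ B B).
  assert (C := derivable_pt_lim_plus _ _ t _ _ A2 B2).
  unfold plus_fct, mult_fct, minus_fct in C.
  replace (2 * ((fst (u t) - fst (v t)) * (ux - vx) + (snd (u t) - snd (v t)) * (uy - vy))) with
    ((ux - vx) * (fst (u t) - fst (v t)) + (fst (u t) - fst (v t)) * (ux - vx) +
     ((uy - vy) * (snd (u t) - snd (v t)) + (snd (u t) - snd (v t)) * (uy - vy))) by ring.
  exact C.
Qed.

Lemma compare (u v : R -> R*R) (F G : R*R -> R*R) c D t0 t1 :
  0 <= c -> 0 <= D -> t0 < t1 ->
  (forall t, t0 < t < t1 ->
     derivable_pt_lim (fun s => fst (u s)) t (fst (F (u t))) /\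
     derivable_pt_lim (fun s => snd (u s)) t (snd (F (u t))) /\
     derivable_pt_lim (fun s => fst (v s)) t (fst (G (v t))) /\
     derivable_pt_lim (fun s => snd (v s)) t (snd (G (v t))) /\
     2 * ((fst (u t) - fst (v t)) * (fst (F (u t)) - fst (G (v t))) +
          (snd (u t) - snd (v t)) * (snd (F (u t)) - snd (G (v t))))
       <= c * (sqd (u t) (v t) + D)) ->
  rcont (fun s => sqd (u s) (v s)) t0 ->
  forall t, t0 < t < t1 -> sqd (u t) (v t) + D <= exp (c * (t - t0)) * (sqd (u t0) (v t0) + D).
Proof.
  intros Hc HD Ht Hd Hr t Htt.
  apply (gron (fun s => sqd (u s) (v s) + D) c t0 t1); auto.
  - intros s Hs. destruct (Hd s Hs) as [A1 [A2 [A3 [A4 A5]]]]. split.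
    pose proof (sqd_pos (u s) (v s)); lra.
    eexists. split. apply derivable_pt_lim_plus. apply sqd_deriv; eauto. apply derivable_pt_lim_const.
    rewrite Rplus_0_r. exact A5.
  - intros e He. destruct (Hr e He) as [d [Hd0 Hh]]. exists d; split; auto. intros h Hh'.
    replace (sqd (u (t0 + h)) (v (t0 + h)) + D - (sqd (u t0) (v t0) + D)) with
      (sqd (u (t0 + h)) (v (t0 + h)) - sqd (u t0) (v t0)) by ring. auto.
Qed.

Lemma ineq_lip a dl X Y P Q : a <= 0 -> 0 <= dl ->
  Rabs P <= dl * (Rabs X + Rabs Y) -> Rabs Q <= dl * (Rabs X + Rabs Y) ->
  forall b, 2 * (X * (a * X - b * Y + P) + Y * (b * X + a * Y + Q)) <= 4 * dl * (X * X + Y * Y).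
Proof.
  intros Ha Hdl HP HQ b'.
  replace (X * (a * X - b' * Y + P) + Y * (b' * X + a * Y + Q)) with (X * (a * X + P) + Y * (a * Y + Q)) by ring.
  assert (X * P <= Rabs X * (dl * (Rabs X + Rabs Y))).
  { eapply Rle_trans. apply Rle_abs. rewrite Rabs_mult. apply Rmult_le_compat_l. apply Rabs_pos. auto. }
  assert (Y * Q <= Rabs Y * (dl * (Rabs X + Rabs Y))).
  { eapply Rle_trans. apply Rle_abs. rewrite Rabs_mult. apply Rmult_le_compat_l. apply Rabs_pos. auto. }
  assert (Rabs X * Rabs X = X * X) by (rewrite <- Rabs_mult; apply Rabs_right; nra).
  assert (Rabs Y * Rabs Y = Y * Y) by (rewrite <- Rabs_mult; apply Rabs_right; nra).
  assert (0 <= dl * ((Rabs X - Rabs Y) * (Rabs X - Rabs Y))) by (pose proof (Rle_0_sqr (Rabs X - Rabs Y)); unfold Rsqr in *; apply Rmult_le_pos; lra).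
  nra.
Qed.

Lemma ineq_close a X Y P Q D : a <= 0 -> P * P + Q * Q <= D ->
  2 * (X * (a * X + P) + Y * (a * Y + Q)) <= 1 * ((X * X + Y * Y) + D).
Proof. intros. pose proof (Rle_0_sqr (X - P)). pose proof (Rle_0_sqr (Y - Q)). unfold Rsqr in *. assert (0 <= -a * (X*X)) by (apply Rmult_le_pos; [lra| pose proof (Rle_0_sqr X); unfold Rsqr in *; lra]). assert (0 <= -a * (Y*Y)) by (apply Rmult_le_pos; [lra| pose proof (Rle_0_sqr Y); unfold Rsqr in *; lra]). nra. Qed.

Definition clampv (r x : R) := Rmax (- r) (Rmin r x).
Definition clp r (p : R*R) := (clampv r (fst p), clampv r (snd p)).
Definition cfield a b (M : R*R -> R*R) r (p : R*R) : R*R :=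
  (a * fst p - b * snd p + fst (M (clp r p)), b * fst p + a * snd p + snd (M (clp r p))).
Definition inbox r (p : R*R) := Rabs (fst p) <= r /\ Rabs (snd p) <= r.
Definition LipB (M : R*R -> R*R) r dl := forall p q, inbox r p -> inbox r q ->
  Rabs (fst (M p) - fst (M q)) <= dl * d1 p q /\ Rabs (snd (M p) - snd (M q)) <= dl * d1 p q.

Lemma clampv_lip r x y : 0 <= r -> Rabs (clampv r x - clampv r y) <= Rabs (x - y).
Proof. intros. unfold clampv, Rmax, Rmin. repeat destruct Rle_dec; unfold Rabs; repeat destruct Rcase_abs; lra. Qed.

Lemma clampv_bd r x : 0 <= r -> Rabs (clampv r x) <= r.
Proof. intros. unfold clampv, Rmax, Rmin. repeat destruct Rle_dec; unfold Rabs; repeat destruct Rcase_abs; lra. Qed.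

Lemma clampv_id r x : Rabs x <= r -> clampv r x = x.
Proof. intros. unfold clampv, Rmax, Rmin. unfold Rabs in H. destruct Rcase_abs; repeat destruct Rle_dec; lra. Qed.

Lemma clp_inbox r p : 0 <= r -> inbox r (clp r p).
Proof. intros. split; apply clampv_bd; auto. Qed.

Lemma clp_id r p : inbox r p -> clp r p = p.
Proof. intros [H1 H2]. unfold clp. rewrite !clampv_id; auto. destruct p; auto. Qed.

Lemma cfield_field a b M r p : inbox r p -> cfield a b M r p = field a b M p.
Proof. intros H. unfold cfield, field. rewrite clp_id; auto. Qed.

Lemma d1_clp r p q : 0 <= r -> d1 (clp r p) (clp r q) <= d1 p q.
Proof. intros. unfold d1, clp; simpl. pose proof (clampv_lip r (fst p) (fst q) H). pose proof (clampv_lip r (snd p) (snd q) H). lra. Qed.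

Lemma cfield_lip a b M r dl : 0 <= r -> 0 <= dl -> LipB M r dl ->
  Lipf (cfield a b M r) (Rabs a + Rabs b + 2 * dl + 1).
Proof.
  intros Hr Hdl HL u v. destruct (HL (clp r u) (clp r v) (clp_inbox r u Hr) (clp_inbox r v Hr)) as [A B].
  pose proof (d1_clp r u v Hr). unfold d1 in *; unfold cfield; simpl.
  set (X := fst u - fst v). set (Y := snd u - snd v).
  set (P := fst (M (clp r u)) - fst (M (clp r v))). set (Q := snd (M (clp r u)) - snd (M (clp r v))).
  replace (a * fst u - b * snd u + fst (M (clp r u)) - (a * fst v - b * snd v + fst (M (clp r v)))) with (a * X - b * Y + P) by (unfold X, Y, P; ring).
  replace (b * fst u + a * snd u + snd (M (clp r u)) - (b * fst v + a * snd v + snd (M (clp r v)))) with (b * X + a * Y + Q) by (unfold X, Y, Q; ring).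
  fold X Y in H. fold P in A. fold Q in B.
  assert (E1 : Rabs (a * X - b * Y + P) <= Rabs a * Rabs X + Rabs b * Rabs Y + Rabs P).
  { rewrite <- !Rabs_mult. eapply Rle_trans. apply Rabs_triang. 
    pose proof (Rabs_triang (a*X) (- (b*Y))). rewrite Rabs_Ropp in H0. unfold Rminus. lra. }
  assert (E2 : Rabs (b * X + a * Y + Q) <= Rabs b * Rabs X + Rabs a * Rabs Y + Rabs Q).
  { rewrite <- !Rabs_mult. eapply Rle_trans. apply Rabs_triang. 
    pose proof (Rabs_triang (b*X) (a*Y)). lra. }
  assert (0 <= dl * (Rabs (fst (clp r u) - fst (clp r v)) + Rabs (snd (clp r u) - snd (clp r v)))) by
    (apply Rmult_le_pos; auto; pose proof (Rabs_pos (fst (clp r u) - fst (clp r v))); pose proof (Rabs_pos (snd (clp r u) - snd (clp r v))); lra).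
  assert (dl * (Rabs (fst (clp r u) - fst (clp r v)) + Rabs (snd (clp r u) - snd (clp r v))) <= dl * (Rabs X + Rabs Y)) by (apply Rmult_le_compat_l; auto).
  pose proof (Rabs_pos X). pose proof (Rabs_pos Y). pose proof (Rabs_pos a). pose proof (Rabs_pos b).
  nra.
Qed.

Lemma mbound M r dl p : LipB M r dl -> M (0,0) = (0,0) -> 0 <= r -> inbox r p ->
  Rabs (fst (M p)) <= dl * (Rabs (fst p) + Rabs (snd p)) /\ Rabs (snd (M p)) <= dl * (Rabs (fst p) + Rabs (snd p)).
Proof.
  intros HL H0 Hr Hp. assert (Hz : inbox r (0,0)) by (split; simpl; rewrite Rabs_R0; auto).
  destruct (HL p (0,0) Hp Hz) as [A B]. rewrite H0 in A, B. unfold d1 in *; simpl in *.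
  rewrite !Rminus_0_r in *. auto.
Qed.

Lemma dlim_ctn f t l : derivable_pt_lim f t l -> ctn f t.
Proof.
  intros H. apply continuous_ctn. apply continuity_pt_filterlim.
  apply derivable_continuous_pt. exists l. exact H.
Qed.

Lemma rd_rcont f t l : right_deriv f t l -> rcont f t.
Proof.
  intros H e He. destruct (H 1 Rlt_0_1) as [d [Hd Hh]].
  exists (Rmin d (e / (Rabs l + 2))). split. apply Rmin_pos; auto. apply Rdiv_lt_0_compat; auto. pose proof (Rabs_pos l); lra.
  intros h Hh'. assert (Hhd : 0 < h < d) by (split; [lra| eapply Rlt_le_trans; [apply Hh'|apply Rmin_l]]).
  specialize (Hh h Hhd).
  assert (Hhe : h < e / (Rabs l + 2)) by (eapply Rlt_le_trans; [apply Hh'|apply Rmin_r]).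
  replace (f (t + h) - f t) with (h * ((f (t + h) - f t) / h)) by (field; lra).
  rewrite Rabs_mult, (Rabs_right h) by lra.
  assert (Rabs ((f (t + h) - f t) / h) < Rabs l + 1).
  { pose proof (Rabs_triang_inv ((f (t + h) - f t) / h) l). lra. }
  apply Rle_lt_trans with (h * (Rabs l + 1)). apply Rmult_le_compat_l; lra.
  apply Rlt_le_trans with (e / (Rabs l + 2) * (Rabs l + 2)). 
  pose proof (Rabs_pos l). nra. right; field. pose proof (Rabs_pos l); lra.
Qed.

Lemma ctn_rcont f t : ctn f t -> rcont f t.
Proof. intros H e He. destruct (H e He) as [d [Hd Hs]]. exists d. split; auto. intros h Hh. apply Hs.
  replace (t + h - t) with h by ring. rewrite Rabs_right; lra. Qed.

Lemma dlim_shift f t0 s l : derivable_pt_lim f (t0 + s) l -> derivable_pt_lim (fun x => f (t0 + x)) s l.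
Proof.
  intros H. replace l with (l * 1) by ring.
  apply (derivable_pt_lim_comp (fun x => t0 + x) f s 1 l).
  replace 1 with (0 + 1) by ring. apply derivable_pt_lim_plus. apply derivable_pt_lim_const. apply derivable_pt_lim_id.
  exact H.
Qed.

Lemma sqd_zero p q : sqd p q <= 0 -> p = q.
Proof. unfold sqd. intros H. pose proof (Rle_0_sqr (fst p - fst q)). pose proof (Rle_0_sqr (snd p - snd q)). unfold Rsqr in *.
  assert ((fst p - fst q) * (fst p - fst q) = 0) by lra. assert ((snd p - snd q) * (snd p - snd q) = 0) by lra.
  apply Rmult_integral in H2. apply Rmult_integral in H3. destruct p, q; simpl in *. f_equal; destruct H2, H3; lra. Qed.

Lemma abs_sq x : Rabs x * Rabs x = x * x.
Proof. rewrite <- Rabs_mult. apply Rabs_right. pose proof (Rle_0_sqr x). unfold Rsqr in *. lra. Qed.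

Lemma rcont_sqd (u v : R -> R*R) t : rcont (fun s => fst (u s)) t -> rcont (fun s => snd (u s)) t ->
  rcont (fun s => fst (v s)) t -> rcont (fun s => snd (v s)) t -> u t = v t ->
  rcont (fun s => sqd (u s) (v s)) t.
Proof.
  intros H1 H2 H3 H4 E e He. set (e' := Rmin 1 (e / 16)).
  assert (He' : 0 < e') by (apply Rmin_pos; lra).
  destruct (H1 e' He') as [d1' [D1 P1]]. destruct (H2 e' He') as [d2' [D2 P2]].
  destruct (H3 e' He') as [d3' [D3 P3]]. destruct (H4 e' He') as [d4' [D4 P4]].
  exists (Rmin (Rmin d1' d2') (Rmin d3' d4')). split. repeat apply Rmin_pos; auto.
  intros h Hh.
  assert (Q1 := P1 h ltac:(split; [lra|]; eapply Rlt_le_trans; [apply Hh| eapply Rle_trans; [apply Rmin_l | apply Rmin_l]])).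
  assert (Q2 := P2 h ltac:(split; [lra|]; eapply Rlt_le_trans; [apply Hh| eapply Rle_trans; [apply Rmin_l | apply Rmin_r]])).
  assert (Q3 := P3 h ltac:(split; [lra|]; eapply Rlt_le_trans; [apply Hh| eapply Rle_trans; [apply Rmin_r | apply Rmin_l]])).
  assert (Q4 := P4 h ltac:(split; [lra|]; eapply Rlt_le_trans; [apply Hh| eapply Rle_trans; [apply Rmin_r | apply Rmin_r]])).
  assert (Z : sqd (u t) (v t) = 0) by (rewrite E; unfold sqd; ring). rewrite Z, Rminus_0_r.
  rewrite E in Q1, Q2. unfold sqd.
  set (X := fst (u (t + h)) - fst (v (t + h))). set (Y := snd (u (t + h)) - snd (v (t + h))).
  assert (AX : Rabs X < 2 * e'). { unfold X. 
    replace (fst (u (t + h)) - fst (v (t + h))) with ((fst (u (t + h)) - fst (v t)) - (fst (v (t + h)) - fst (v t))) by ring.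
    eapply Rle_lt_trans. apply Rabs_triang. rewrite Rabs_Ropp. lra. }
  assert (AY : Rabs Y < 2 * e'). { unfold Y. 
    replace (snd (u (t + h)) - snd (v (t + h))) with ((snd (u (t + h)) - snd (v t)) - (snd (v (t + h)) - snd (v t))) by ring.
    eapply Rle_lt_trans. apply Rabs_triang. rewrite Rabs_Ropp. lra. }
  assert (e' <= 1) by apply Rmin_l. assert (e' <= e/16) by apply Rmin_r.
  rewrite <- (abs_sq X), <- (abs_sq Y). pose proof (Rabs_pos X). pose proof (Rabs_pos Y).
  rewrite Rabs_right by (apply Rle_ge; nra). nra.
Qed.

Lemma first_hit (g : R -> R) t0 A lv : t0 < A -> (forall s, t0 <= s <= A -> ctn g s) -> g t0 < lv -> lv <= g A ->
  exists tau, t0 < tau <= A /\ g tau = lv /\ forall s, t0 <= s < tau -> g s < lv.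
Proof.
  intros HA Hc H0 HAv.
  set (E := fun s => t0 <= s <= A /\ forall s', t0 <= s' <= s -> g s' < lv).
  assert (Hb : bound E) by (exists A; intros s [Hs _]; lra).
  assert (He : exists x, E x) by (exists t0; split; [lra| intros s' Hs'; replace s' with t0 by lra; auto]).
  destruct (completeness E Hb He) as [tau [Hub Hlub]].
  assert (Ht0 : t0 <= tau) by (apply Hub; destruct He; unfold E; split; [lra| intros s' Hs'; replace s' with t0 by lra; auto]).
  assert (HtA : tau <= A) by (apply Hlub; intros s [Hs _]; lra).
  assert (Hbelow : forall s, t0 <= s < tau -> g s < lv).
  { intros s Hs. destruct (Rle_dec s t0). replace s with t0 by lra; auto.
    destruct (classic (exists s'', E s'' /\ s < s'')) as [[s'' [[_ Hs''] Hlt]]|Hn].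
    apply Hs''. lra.
    exfalso. assert (tau <= s). { apply Hlub. intros x Hx. destruct (Rle_dec x s); auto. exfalso; apply Hn; exists x; split; auto; lra. } lra. }
  assert (Hge : lv <= g tau).
  { destruct (Rle_dec lv (g tau)) as [|Hn]; auto. exfalso. apply Rnot_le_lt in Hn.
    destruct (Req_dec tau A) as [Heq|Hneq]. rewrite Heq in Hn. lra.
    destruct (Hc tau ltac:(lra) (lv - g tau) ltac:(lra)) as [d [Hd Hs]].
    set (s1 := Rmin (tau + d/2) A).
    assert (E s1). { split. unfold s1. split. apply Rmin_glb; lra. apply Rmin_r.
      intros s' Hs'. destruct (Rlt_le_dec s' tau). apply Hbelow; lra.
      assert (Rabs (s' - tau) < d). { rewrite Rabs_right by lra. assert (s1 <= tau + d/2) by apply Rmin_l. lra. }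
      specialize (Hs s' H). pose proof (Rle_abs (g s' - g tau)). lra. }
    apply Hub in H. assert (tau < s1). { unfold s1. apply Rmin_glb_lt; lra. } lra. }
  assert (Hgt : tau > t0).
  { destruct (Hc t0 ltac:(lra) (lv - g t0) ltac:(lra)) as [d [Hd Hs]].
    set (s1 := Rmin (t0 + d/2) A).
    assert (E s1). { split. unfold s1. split. apply Rmin_glb; lra. apply Rmin_r.
      intros s' Hs'. assert (Rabs (s' - t0) < d). { rewrite Rabs_right by lra. assert (s1 <= t0 + d/2) by apply Rmin_l. lra. }
      specialize (Hs s' H). pose proof (Rle_abs (g s' - g t0)). lra. }
    apply Hub in H. assert (t0 < s1). { unfold s1. apply Rmin_glb_lt; lra. } lra. }
  exists tau. split. lra. split; auto.
  destruct (Rle_dec (g tau) lv) as [|Hn]; [lra|]. exfalso. apply Rnot_le_lt in Hn.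
  destruct (Hc tau ltac:(lra) (g tau - lv) ltac:(lra)) as [d [Hd Hs]].
  set (s1 := Rmax t0 (tau - d/2)).
  assert (Hs1 : t0 <= s1 < tau) by (unfold s1; split; [apply Rmax_l| apply Rmax_lub_lt; lra]).
  assert (Rabs (s1 - tau) < d). { rewrite Rabs_left by lra. assert (tau - d/2 <= s1) by apply Rmax_r. lra. }
  specialize (Hs s1 H). specialize (Hbelow s1 Hs1). rewrite Rabs_minus_sym in Hs. pose proof (Rle_abs (g tau - g s1)). lra.
Qed.

Lemma near_eq_lemma (A B : R) : (forall e, 0 < e -> Rabs (A - B) < e) -> A = B.
Proof. intros H. destruct (Req_dec A B); auto. exfalso. assert (0 < Rabs (A - B)) by (apply Rabs_pos_lt; lra).
  specialize (H (Rabs (A - B)) H1). lra. Qed.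

Lemma ctn_left_eq f g x d : 0 < d -> ctn f x -> ctn g x -> (forall s, x - d < s < x -> f s = g s) -> f x = g x.
Proof.
  intros Hd Hf Hg He. apply near_eq_lemma. intros e He0.
  destruct (Hf (e/2)) as [d1' [D1 P1]]; try lra. destruct (Hg (e/2)) as [d2' [D2 P2]]; try lra.
  set (s := x - Rmin d (Rmin d1' d2') / 2).
  assert (Hm : 0 < Rmin d (Rmin d1' d2')) by (repeat apply Rmin_pos; auto).
  assert (Hm1 : Rmin d (Rmin d1' d2') <= d) by apply Rmin_l.
  assert (Hm2 : Rmin d (Rmin d1' d2') <= d1') by (eapply Rle_trans; [apply Rmin_r| apply Rmin_l]).
  assert (Hm3 : Rmin d (Rmin d1' d2') <= d2') by (eapply Rle_trans; [apply Rmin_r| apply Rmin_r]).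
  assert (Hs : Rabs (s - x) < Rmin d (Rmin d1' d2')) by (unfold s; rewrite Rabs_left; lra).
  specialize (P1 s ltac:(lra)). specialize (P2 s ltac:(lra)). rewrite He in P1 by (unfold s; lra).
  replace (f x - g x) with (- (g s - f x) + (g s - g x)) by ring.
  eapply Rle_lt_trans. apply Rabs_triang. rewrite Rabs_Ropp. lra.
Qed.

Lemma left_lim_eq f g x l d : 0 < d -> left_lim f x l -> ctn g x -> (forall s, x - d < s < x -> f s = g s) -> l = g x.
Proof.
  intros Hd Hf Hg He. apply near_eq_lemma. intros e He0.
  destruct (Hf (e/2)) as [d1' [D1 P1]]; try lra. destruct (Hg (e/2)) as [d2' [D2 P2]]; try lra.
  set (s := x - Rmin d (Rmin d1' d2') / 2).
  assert (Hm : 0 < Rmin d (Rmin d1' d2')) by (repeat apply Rmin_pos; auto).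
  assert (Hm1 : Rmin d (Rmin d1' d2') <= d) by apply Rmin_l.
  assert (Hm2 : Rmin d (Rmin d1' d2') <= d1') by (eapply Rle_trans; [apply Rmin_r| apply Rmin_l]).
  assert (Hm3 : Rmin d (Rmin d1' d2') <= d2') by (eapply Rle_trans; [apply Rmin_r| apply Rmin_r]).
  assert (Hs : Rabs (s - x) < Rmin d (Rmin d1' d2')) by (unfold s; rewrite Rabs_left; lra).
  specialize (P1 s ltac:(unfold s; lra)). specialize (P2 s ltac:(lra)). rewrite He in P1 by (unfold s; lra).
  replace (l - g x) with (- (g s - l) + (g s - g x)) by ring.
  eapply Rle_lt_trans. apply Rabs_triang. rewrite Rabs_Ropp. lra.
Qed.

Lemma rcont_shift f t0 s : rcont f (t0 + s) -> rcont (fun x => f (t0 + x)) s.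
Proof. intros H e He. destruct (H e He) as [d [Hd Hh]]. exists d; split; auto. intros h Hh'.
  replace (t0 + (s + h)) with (t0 + s + h) by ring. auto. Qed.

Lemma left_lim_shift f t0 s l : left_lim f (t0 + s) l -> left_lim (fun x => f (t0 + x)) s l.
Proof. intros H e He. destruct (H e He) as [d [Hd Hh]]. exists d; split; auto. intros x Hx. apply Hh. lra. Qed.

Lemma pair_eq (p q : R*R) : fst p = fst q -> snd p = snd q -> p = q.
Proof. destruct p, q; simpl; intros; subst; auto. Qed.

Lemma follow a b k M eps r mg dl w t0 phi tau :
  a < 0 -> 0 <= dl -> 0 < mg -> mg <= r -> LipB M r dl ->
  hybrid_sol a b k M eps w -> 0 <= t0 -> 0 < tau ->
  phi 0 = w t0 ->
  (forall s, 0 <= s -> derivable_pt_lim (fun x => fst (phi x)) s (fst (cfield a b M r (phi s))) /\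
                      derivable_pt_lim (fun x => snd (phi x)) s (snd (cfield a b M r (phi s)))) ->
  (forall s, 0 < s < tau -> snd (phi s) < eps) ->
  (forall s, 0 <= s < tau -> inbox (r - mg) (phi s)) ->
  (exists h, 0 < h /\ forall s, 0 < s < h -> snd (w (t0 + s)) < eps) ->
  forall s, 0 <= s < tau -> w (t0 + s) = phi s.
Proof.
  intros Ha Hdl Hmg Hmgr HL Hw Ht0 Htau Hp0 Hphi Hphy Hphb Hh0.
  destruct Hw as [Hw1 [Hw2 [Hw3 [Hw4 Hw5]]]].
  assert (Pc1 : forall s, 0 <= s -> ctn (fun x => fst (phi x)) s) by (intros s Hs; eapply dlim_ctn; apply (Hphi s Hs)).
  assert (Pc2 : forall s, 0 <= s -> ctn (fun x => snd (phi x)) s) by (intros s Hs; eapply dlim_ctn; apply (Hphi s Hs)).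
  set (E := fun s => 0 <= s < tau /\ forall s', 0 <= s' <= s -> w (t0 + s') = phi s').
  assert (HE0 : E 0). { split. lra. intros s' Hs'. replace s' with 0 by lra. rewrite Rplus_0_r; auto. }
  assert (Hb : bound E) by (exists tau; intros s [Hs _]; lra).
  destruct (completeness E Hb (ex_intro _ 0 HE0)) as [sg [Hub Hlub]].
  assert (Hsg0 : 0 <= sg) by (apply Hub; auto).
  assert (Hsgt : sg <= tau) by (apply Hlub; intros s [Hs _]; lra).
  assert (HA : forall s, 0 <= s < sg -> w (t0 + s) = phi s).
  { intros s Hs. destruct (classic (exists s'', E s'' /\ s < s'')) as [[s'' [[_ Hs''] Hlt]]|Hn].
    apply Hs''. lra.
    exfalso. assert (sg <= s). { apply Hlub. intros x Hx. destruct (Rle_dec x s); auto. exfalso; apply Hn; exists x; split; auto; lra. } lra. }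
  intros s Hs. destruct (Rlt_le_dec s sg) as [Hlt|Hge]. apply HA; lra.
  exfalso. assert (Hsgtau : sg < tau) by lra. clear s Hs Hge.
  assert (Heq : w (t0 + sg) = phi sg).
  { destruct (Req_dec sg 0) as [Z|NZ]. rewrite Z, Rplus_0_r; auto.
    assert (Hx : 0 < t0 + sg) by lra.
    destruct (Hw1 (t0 + sg) ltac:(lra)) as [Hlt|Heqe].
    - destruct (Hw2 (t0 + sg) Hx Hlt) as [D1 D2]. apply pair_eq.
      + apply (ctn_left_eq (fun x => fst (w (t0 + x))) (fun x => fst (phi x)) sg sg); try lra.
        exact (dlim_ctn _ _ _ (dlim_shift (fun y => fst (w y)) t0 sg _ D1)). apply Pc1; lra.
        intros x Hx'. rewrite HA; auto. lra.
      + apply (ctn_left_eq (fun x => snd (w (t0 + x))) (fun x => snd (phi x)) sg sg); try lra.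
        exact (dlim_ctn _ _ _ (dlim_shift (fun y => snd (w y)) t0 sg _ D2)). apply Pc2; lra.
        intros x Hx'. rewrite HA; auto. lra.
    - exfalso. destruct (Hw5 (t0 + sg) Hx Heqe) as [xi [_ L2]].
      assert (eps = snd (phi sg)).
      { apply (left_lim_eq (fun x => snd (w (t0 + x))) (fun x => snd (phi x)) sg eps sg); try lra.
        exact (left_lim_shift (fun y => snd (w y)) t0 sg eps L2). apply Pc2; lra. intros x Hx'. rewrite HA; auto. lra. }
      specialize (Hphy sg ltac:(lra)). lra. }
  assert (Hh0' : exists h, 0 < h /\ forall s, 0 < s < h -> snd (w (t0 + sg + s)) < eps).
  { destruct (Req_dec sg 0) as [Z|NZ].
    - rewrite Z, Rplus_0_r. auto.
    - assert (Hl : snd (w (t0 + sg)) < eps) by (rewrite Heq; apply Hphy; lra).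
      destruct (Hw3 (t0 + sg) ltac:(lra)) as [_ R2]. apply rd_rcont in R2.
      destruct (R2 (eps - snd (w (t0 + sg))) ltac:(lra)) as [d [Hd Hdh]].
      exists d; split; auto. intros s' Hs'. specialize (Hdh s' Hs'). pose proof (Rle_abs (snd (w (t0 + sg + s')) - snd (w (t0 + sg)))). lra. }
  destruct Hh0' as [h0 [Hh0p Hh0s]].
  assert (Hh1 : exists h, 0 < h /\ forall s, 0 <= s < h -> inbox r (w (t0 + sg + s))).
  { destruct (Hw3 (t0 + sg) ltac:(lra)) as [R1 R2]. apply rd_rcont in R1. apply rd_rcont in R2.
    destruct (R1 mg Hmg) as [d1' [D1 Q1]]. destruct (R2 mg Hmg) as [d2' [D2 Q2]].
    destruct (Hphb sg ltac:(lra)) as [B1 B2]. rewrite <- Heq in B1, B2.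
    exists (Rmin d1' d2'). split. apply Rmin_pos; auto. intros s' Hs'.
    destruct (Req_dec s' 0) as [Z|NZ]. rewrite Z, Rplus_0_r. split; lra.
    assert (q1 := Q1 s' ltac:(split; [lra| eapply Rlt_le_trans; [apply Hs'| apply Rmin_l]])).
    assert (q2 := Q2 s' ltac:(split; [lra| eapply Rlt_le_trans; [apply Hs'| apply Rmin_r]])).
    split.
    + pose proof (Rabs_triang_inv (fst (w (t0 + sg + s'))) (fst (w (t0 + sg)))). lra.
    + pose proof (Rabs_triang_inv (snd (w (t0 + sg + s'))) (snd (w (t0 + sg)))). lra. }
  destruct Hh1 as [h1 [Hh1p Hh1s]].
  set (h' := Rmin h0 (Rmin h1 (tau - sg)) / 2).
  assert (Hh'p : 0 < h') by (unfold h'; assert (0 < Rmin h0 (Rmin h1 (tau - sg))) by (repeat apply Rmin_pos; lra); lra).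
  assert (Hh'1 : 2 * h' <= h0) by (unfold h'; pose proof (Rmin_l h0 (Rmin h1 (tau - sg))); lra).
  assert (Hh'2 : 2 * h' <= h1) by (unfold h'; pose proof (Rmin_r h0 (Rmin h1 (tau - sg))); pose proof (Rmin_l h1 (tau - sg)); lra).
  assert (Hh'3 : 2 * h' <= tau - sg) by (unfold h'; pose proof (Rmin_r h0 (Rmin h1 (tau - sg))); pose proof (Rmin_r h1 (tau - sg)); lra).
  assert (Hcmp := compare (fun x => w (t0 + x)) phi (field a b M) (cfield a b M r) (4 * dl) 0 sg (sg + 2 * h')
    ltac:(lra) ltac:(lra) ltac:(lra)).
  assert (Hstep : forall x, sg < x < sg + 2 * h' -> w (t0 + x) = phi x).
  { intros x Hx. apply sqd_zero.
    assert (Hr := Hcmp). clear Hcmp.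
    assert (Hd : forall t, sg < t < sg + 2 * h' ->
     derivable_pt_lim (fun s => fst (w (t0 + s))) t (fst (field a b M (w (t0 + t)))) /\
     derivable_pt_lim (fun s => snd (w (t0 + s))) t (snd (field a b M (w (t0 + t)))) /\
     derivable_pt_lim (fun s => fst (phi s)) t (fst (cfield a b M r (phi t))) /\
     derivable_pt_lim (fun s => snd (phi s)) t (snd (cfield a b M r (phi t))) /\
     2 * ((fst (w (t0 + t)) - fst (phi t)) * (fst (field a b M (w (t0 + t))) - fst (cfield a b M r (phi t))) +
          (snd (w (t0 + t)) - snd (phi t)) * (snd (field a b M (w (t0 + t))) - snd (cfield a b M r (phi t))))
       <= 4 * dl * (sqd (w (t0 + t)) (phi t) + 0)).
    { intros t Ht.
      assert (Hwy : snd (w (t0 + t)) < eps).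
      { replace (t0 + t) with (t0 + sg + (t - sg)) by ring. apply Hh0s. lra. }
      destruct (Hw2 (t0 + t) ltac:(lra) Hwy) as [D1 D2].
      destruct (Hphi t ltac:(lra)) as [D3 D4].
      split. exact (dlim_shift (fun y => fst (w y)) t0 t _ D1). split. exact (dlim_shift (fun y => snd (w y)) t0 t _ D2). split; auto. split; auto.
      assert (Hbw : inbox r (w (t0 + t))).
      { replace (t0 + t) with (t0 + sg + (t - sg)) by ring. apply Hh1s. lra. }
      assert (Hbp : inbox r (phi t)). { destruct (Hphb t ltac:(lra)). split; lra. }
      rewrite (cfield_field a b M r (phi t) Hbp).
      destruct (HL _ _ Hbw Hbp) as [L1 L2].
      unfold field; simpl. rewrite Rplus_0_r. unfold sqd, d1 in *.
      set (X := fst (w (t0 + t)) - fst (phi t)) in *. set (Y := snd (w (t0 + t)) - snd (phi t)) in *.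
      replace (a * fst (w (t0 + t)) - b * snd (w (t0 + t)) + fst (M (w (t0 + t))) - (a * fst (phi t) - b * snd (phi t) + fst (M (phi t))))
        with (a * X - b * Y + (fst (M (w (t0 + t))) - fst (M (phi t)))) by (unfold X, Y; ring).
      replace (b * fst (w (t0 + t)) + a * snd (w (t0 + t)) + snd (M (w (t0 + t))) - (b * fst (phi t) + a * snd (phi t) + snd (M (phi t))))
        with (b * X + a * Y + (snd (M (w (t0 + t))) - snd (M (phi t)))) by (unfold X, Y; ring).
      apply ineq_lip; auto; lra. }
    assert (Hrc : rcont (fun s => sqd (w (t0 + s)) (phi s)) sg).
    { destruct (Hw3 (t0 + sg) ltac:(lra)) as [R1 R2]. apply rd_rcont in R1. apply rd_rcont in R2.
      apply rcont_sqd; auto. exact (rcont_shift (fun y => fst (w y)) t0 sg R1). exact (rcont_shift (fun y => snd (w y)) t0 sg R2).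
      apply ctn_rcont; apply Pc1; lra. apply ctn_rcont; apply Pc2; lra. }
    specialize (Hr Hd Hrc x Hx). cbv beta in Hr. rewrite Heq in Hr.
    assert (sqd (phi sg) (phi sg) = 0) by (unfold sqd; ring). rewrite H in Hr. lra. }
  assert (E (sg + h')).
  { split. lra. intros s' Hs'. destruct (Rlt_le_dec s' sg). apply HA; lra.
    destruct (Req_dec s' sg). subst; auto. apply Hstep. lra. }
  apply Hub in H. lra.
Qed.

Lemma mvt_bound (h h' : R -> R) a b B : (forall c, derivable_pt_lim h c (h' c)) ->
  (forall c, Rmin a b <= c <= Rmax a b -> Rabs (h' c) <= B) -> Rabs (h b - h a) <= B * Rabs (b - a).
Proof.
  intros Hd Hb. destruct (Rtotal_order a b) as [Hab|[Hab|Hab]].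
  - destruct (MVT_cor2 h h' a b Hab (fun c _ => Hd c)) as [c [E Hc]]. rewrite E, Rabs_mult.
    apply Rmult_le_compat_r. apply Rabs_pos. apply Hb. rewrite Rmin_left, Rmax_right; lra.
  - subst. rewrite !Rminus_diag, Rabs_R0. assert (0 <= B). { eapply Rle_trans. apply Rabs_pos. apply (Hb b). rewrite Rmin_left, Rmax_left; lra. } lra.
  - destruct (MVT_cor2 h h' b a Hab (fun c _ => Hd c)) as [c [E Hc]].
    rewrite Rabs_minus_sym, E, Rabs_mult, (Rabs_minus_sym b a).
    apply Rmult_le_compat_r. apply Rabs_pos. apply Hb. rewrite Rmin_right, Rmax_left; lra.
Qed.

Lemma sqrt_abs_bd x y : sqrt ((x - 0) ^ 2 + (y - 0) ^ 2) <= Rabs x + Rabs y.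
Proof.
  rewrite <- (sqrt_square (Rabs x + Rabs y)) by (pose proof (Rabs_pos x); pose proof (Rabs_pos y); lra).
  apply sqrt_le_1_alt. rewrite !Rminus_0_r. simpl.
  pose proof (abs_sq x). pose proof (abs_sq y). pose proof (Rabs_pos x). pose proof (Rabs_pos y). nra.
Qed.

Lemma C2_lipB (g : R*R -> R) : C2_fun g ->
  derivable_pt_lim (fun u => g (u, 0)) 0 0 -> derivable_pt_lim (fun v => g (0, v)) 0 0 ->
  forall dl, 0 < dl -> exists rho, 0 < rho /\ forall p q, inbox rho p -> inbox rho q ->
    Rabs (g p - g q) <= dl * d1 p q.
Proof.
  intros [gx [gy [gxx [gxy [gyx [gyy [[Px Py] [_ [_ [_ [Cx [Cy _]]]]]]]]]]]] H0x H0y dl Hdl.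
  assert (Z1 : gx (0,0) = 0) by (apply (uniqueness_limite (fun u => g (u, 0)) 0); auto).
  assert (Z2 : gy (0,0) = 0) by (apply (uniqueness_limite (fun v => g (0, v)) 0); auto).
  destruct (Cx (0,0) dl Hdl) as [d1' [D1 Q1]]. destruct (Cy (0,0) dl Hdl) as [d2' [D2 Q2]].
  set (rho := Rmin d1' d2' / 4).
  assert (Hrho : 0 < rho) by (unfold rho; assert (0 < Rmin d1' d2') by (apply Rmin_pos; auto); lra).
  assert (Hin : forall c, inbox rho c -> dist2 c (0,0) < Rmin d1' d2').
  { intros c [A B]. unfold dist2. simpl. eapply Rle_lt_trans. apply sqrt_abs_bd. unfold rho in *.
    assert (0 < Rmin d1' d2') by (apply Rmin_pos; auto). lra. }
  exists rho. split; auto. intros p q Hp Hq.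
  replace (g p - g q) with ((g (fst p, snd p) - g (fst q, snd p)) + (g (fst q, snd p) - g (fst q, snd q)))
    by (destruct p, q; simpl; ring).
  eapply Rle_trans. apply Rabs_triang. unfold d1. rewrite Rmult_plus_distr_l.
  apply Rplus_le_compat.
  - apply (mvt_bound (fun u => g (u, snd p)) (fun u => gx (u, snd p)) (fst q) (fst p) dl).
    + intros c. apply Px.
    + intros c Hc. assert (Hb : inbox rho (c, snd p)).
      { destruct Hp as [A B], Hq as [A' B']. split; simpl; auto.
        unfold Rmin, Rmax in Hc. destruct Rle_dec in Hc; unfold Rabs in *; repeat destruct Rcase_abs; lra. }
      specialize (Hin _ Hb). specialize (Q1 (c, snd p) ltac:(eapply Rlt_le_trans; [exact Hin| apply Rmin_l])).
      rewrite Z1, Rminus_0_r in Q1. lra.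
  - apply (mvt_bound (fun v => g (fst q, v)) (fun v => gy (fst q, v)) (snd q) (snd p) dl).
    + intros c. apply Py.
    + intros c Hc. assert (Hb : inbox rho (fst q, c)).
      { destruct Hp as [A B], Hq as [A' B']. split; simpl; auto.
        unfold Rmin, Rmax in Hc. destruct Rle_dec in Hc; unfold Rabs in *; repeat destruct Rcase_abs; lra. }
      specialize (Hin _ Hb). specialize (Q2 (fst q, c) ltac:(eapply Rlt_le_trans; [exact Hin| apply Rmin_r])).
      rewrite Z2, Rminus_0_r in Q2. lra.
Qed.

Lemma M_lipB (M : R*R -> R*R) : C2_map M ->
  derivable_pt_lim (fun u => fst (M (u, 0))) 0 0 ->
  derivable_pt_lim (fun v => fst (M (0, v))) 0 0 ->
  derivable_pt_lim (fun u => snd (M (u, 0))) 0 0 ->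
  derivable_pt_lim (fun v => snd (M (0, v))) 0 0 ->
  forall dl, 0 < dl -> exists rho, 0 < rho /\ forall r, 0 <= r <= rho -> LipB M r dl.
Proof.
  intros [C1 C2] H1 H2 H3 H4 dl Hdl.
  destruct (C2_lipB _ C1 H1 H2 dl Hdl) as [r1 [R1 L1]].
  destruct (C2_lipB _ C2 H3 H4 dl Hdl) as [r2 [R2 L2]].
  exists (Rmin r1 r2). split. apply Rmin_pos; auto.
  intros r Hr p q [A B] [A' B']. pose proof (Rmin_l r1 r2). pose proof (Rmin_r r1 r2). split.
  apply L1; split; lra. apply L2; split; lra.
Qed.

Definition Lsol a b k (t : R) : R*R :=
  (sqrt (1 + k^2) * exp (a * t) * cos (arccot (- k) + b * t),
   sqrt (1 + k^2) * exp (a * t) * sin (arccot (- k) + b * t)).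

Lemma sqrt_pos1 x : 0 < sqrt (1 + x^2).
Proof. apply sqrt_lt_R0. pose proof (pow2_ge_0 x). lra. Qed.

Lemma Lsol_0 a b k : Lsol a b k 0 = (- k, 1).
Proof.
  unfold Lsol, arccot. rewrite !Rmult_0_r, exp_0, Rplus_0_r, cos_shift, sin_shift, sin_atan, cos_atan.
  assert (E : Rsqr (- k) = k ^ 2) by (unfold Rsqr; ring). rewrite E.
  pose proof (sqrt_pos1 k). f_equal; field; lra.
Qed.

Lemma Lsol_deriv a b k t :
  derivable_pt_lim (fun s => fst (Lsol a b k s)) t (a * fst (Lsol a b k t) - b * snd (Lsol a b k t)) /\
  derivable_pt_lim (fun s => snd (Lsol a b k s)) t (b * fst (Lsol a b k t) + a * snd (Lsol a b k t)).
Proof.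
  unfold Lsol; simpl. split; apply is_derive_Reals; auto_derive; auto; ring.
Qed.

Lemma Lsol_bd a b k t : a < 0 -> 0 <= t ->
  Rabs (fst (Lsol a b k t)) <= sqrt (1 + k^2) /\ Rabs (snd (Lsol a b k t)) <= sqrt (1 + k^2).
Proof.
  intros Ha Ht. unfold Lsol; cbn [fst snd]. pose proof (sqrt_pos1 k).
  assert (exp (a * t) <= 1). { assert (a * t <= 0) by nra. pose proof (exp_le_mono _ _ H0). rewrite exp_0 in H1. lra. }
  pose proof (exp_pos (a * t)).
  rewrite !Rabs_mult, (Rabs_right (sqrt (1 + k^2))) by lra. rewrite (Rabs_right (exp (a * t))) by lra.
  pose proof (COS_bound (arccot (- k) + b * t)). pose proof (SIN_bound (arccot (- k) + b * t)).
  assert (Rabs (cos (arccot (- k) + b * t)) <= 1) by (apply Rabs_le; lra).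
  assert (Rabs (sin (arccot (- k) + b * t)) <= 1) by (apply Rabs_le; lra).
  pose proof (Rabs_pos (cos (arccot (- k) + b * t))). pose proof (Rabs_pos (sin (arccot (- k) + b * t))).
  assert (exp (a * t) * Rabs (cos (arccot (- k) + b * t)) <= 1) by nra.
  assert (exp (a * t) * Rabs (sin (arccot (- k) + b * t)) <= 1) by nra.
  rewrite !Rmult_assoc. split; apply Rle_trans with (sqrt (1 + k^2) * 1); try lra; apply Rmult_le_compat_l; lra.
Qed.

Lemma sqrt_exp x : 0 < x -> sqrt x = exp (ln x / 2).
Proof.
  intros Hx. rewrite <- (sqrt_square (exp (ln x / 2))) by (left; apply exp_pos).
  f_equal. rewrite <- exp_plus. replace (ln x / 2 + ln x / 2) with (ln x) by field. rewrite exp_ln; auto.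
Qed.

Definition te a b k := (2 * PI + arccot (- (a / b)) - arccot (- k)) / b.

Lemma arccot_bd x : 0 < arccot x < PI.
Proof. unfold arccot. pose proof (atan_bound x). lra. Qed.

Lemma te_pos a b k : 0 < b -> 0 < te a b k.
Proof. intros Hb. unfold te. pose proof (arccot_bd (- (a/b))). pose proof (arccot_bd (- k)). pose proof PI_RGT_0.
  apply Rdiv_lt_0_compat; lra. Qed.

Lemma Lsol_te a b k : a < 0 -> 0 < b ->
  a / b * (3 * PI / 2) - a / b * arccot (- k) + / 2 * ln (1 + k ^ 2) >
  a / b * (- (PI / 2)) - a / b * arccot (- (a / b)) + / 2 * ln (1 + (a / b) ^ 2) ->
  1 < snd (Lsol a b k (te a b k)).
Proof.
  intros Ha Hb Hc. unfold Lsol, te; cbn [fst snd].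
  replace (arccot (- k) + b * ((2 * PI + arccot (- (a / b)) - arccot (- k)) / b)) with
    (arccot (- (a/b)) + 2 * INR 1 * PI) by (simpl; field; lra).
  rewrite sin_period.
  replace (sin (arccot (- (a / b)))) with (1 / sqrt (1 + (a/b)^2)).
  2:{ unfold arccot. rewrite sin_shift, cos_atan. f_equal. f_equal. unfold Rsqr; ring. }
  assert (P1 : 0 < 1 + k^2) by (pose proof (pow2_ge_0 k); lra).
  assert (P2 : 0 < 1 + (a/b)^2) by (pose proof (pow2_ge_0 (a/b)); lra).
  rewrite !sqrt_exp by auto.
  replace (exp (ln (1 + k ^ 2) / 2) * exp (a * ((2 * PI + arccot (- (a / b)) - arccot (- k)) / b)) *
    (1 / exp (ln (1 + (a / b) ^ 2) / 2))) with
    (exp (ln (1 + k ^ 2) / 2 + a * ((2 * PI + arccot (- (a / b)) - arccot (- k)) / b) - ln (1 + (a / b) ^ 2) / 2)).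
  2:{ unfold Rminus. rewrite !exp_plus, exp_Ropp. field. apply Rgt_not_eq, exp_pos. }
  apply Rle_lt_trans with (exp 0). rewrite exp_0; lra. apply exp_increasing.
  replace (a * ((2 * PI + arccot (- (a / b)) - arccot (- k)) / b)) with
    (a / b * (2 * PI + arccot (- (a / b)) - arccot (- k))) by (field; lra).
  lra.
Qed.

Definition fl T t := IZR (up (t / T) - 1).

Lemma fl_spec T t : 0 < T -> fl T t * T <= t < (fl T t + 1) * T.
Proof.
  intros HT. unfold fl. rewrite minus_IZR. destruct (archimed (t / T)) as [A B].
  assert (t = (t / T) * T) by (field; lra).
  split; [apply Rmult_le_reg_r with (/T) | apply Rmult_lt_reg_r with (/T)]; try (apply Rinv_0_lt_compat; lra);
  replace ((IZR (up (t / T)) - 1) * T * / T) with (IZR (up (t / T)) - 1) by (field; lra);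
  try replace ((IZR (up (t / T)) - 1 + 1) * T * / T) with (IZR (up (t / T))) by (field; lra);
  replace (t * / T) with (t / T) by (unfold Rdiv; ring); lra.
Qed.

Lemma fl_unique T t (n : Z) : 0 < T -> IZR n * T <= t < (IZR n + 1) * T -> fl T t = IZR n.
Proof.
  intros HT Hn. unfold fl. 
  assert (IZR n <= t / T < IZR n + 1).
  { split. apply Rmult_le_reg_r with T; auto. replace (t / T * T) with t by (field; lra). lra.
    apply Rmult_lt_reg_r with T; auto. replace (t / T * T) with t by (field; lra). lra. }
  assert (up (t / T) = (n + 1)%Z). { symmetry. apply tech_up; rewrite plus_IZR; simpl; lra. }
  rewrite H0. f_equal. lia.
Qed.

Lemma fl_is_int T t : exists n : Z, fl T t = IZR n.
Proof. exists (up (t / T) - 1)%Z. auto. Qed.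

Lemma fl_nonneg T t : 0 < T -> 0 <= t -> 0 <= fl T t.
Proof.
  intros HT Ht. destruct (fl_is_int T t) as [n Hn]. pose proof (fl_spec T t HT). rewrite Hn in *.
  assert (-1 < IZR n). { destruct H. assert (0 < (IZR n + 1) * T) by lra.
    assert (0 < IZR n + 1). { destruct (Rle_dec (IZR n + 1) 0); auto. nra. lra. } lra. }
  apply lt_IZR in H0. apply IZR_le. lia.
Qed.

Definition frac T t := t - T * fl T t.

Lemma frac_bd T t : 0 < T -> 0 <= frac T t < T.
Proof. intros HT. pose proof (fl_spec T t HT). unfold frac. nra. Qed.

Lemma fl_plusT T t : 0 < T -> fl T (t + T) = fl T t + 1.
Proof.
  intros HT. destruct (fl_is_int T t) as [n Hn]. rewrite Hn. rewrite <- plus_IZR.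
  apply fl_unique; auto. pose proof (fl_spec T t HT). rewrite Hn in H. rewrite plus_IZR. simpl. nra.
Qed.

Lemma frac_plusT T t : 0 < T -> frac T (t + T) = frac T t.
Proof. intros HT. unfold frac. rewrite fl_plusT; auto. ring. Qed.

Lemma dlim_loc (f g : R -> R) t l d : 0 < d -> (forall s, Rabs (s - t) < d -> f s = g s) ->
  derivable_pt_lim g t l -> derivable_pt_lim f t l.
Proof.
  intros Hd He Hg e He0. destruct (Hg e He0) as [del Hdel].
  assert (Hm : 0 < Rmin d del) by (apply Rmin_pos; auto; apply cond_pos).
  exists (mkposreal _ Hm). intros h Hh0 Hh. simpl in Hh.
  rewrite !He. apply Hdel; auto. eapply Rlt_le_trans; [exact Hh| apply Rmin_r].
  rewrite Rminus_diag, Rabs_R0; auto.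
  replace (t + h - t) with h by ring. eapply Rlt_le_trans; [exact Hh| apply Rmin_l].
Qed.

Lemma dlim_rd f t l : derivable_pt_lim f t l -> right_deriv f t l.
Proof.
  intros H e He. destruct (H e He) as [del Hdel]. exists del. split. apply cond_pos.
  intros h Hh. apply Hdel. lra. rewrite Rabs_right; lra.
Qed.

Lemma rd_loc (f g : R -> R) t l d : 0 < d -> (forall h, 0 <= h < d -> f (t + h) = g (t + h)) ->
  right_deriv g t l -> right_deriv f t l.
Proof.
  intros Hd He Hg e He0. destruct (Hg e He0) as [del [Hdel Hh]].
  exists (Rmin d del). split. apply Rmin_pos; auto. intros h Hh'.
  assert (E1 : f (t + h) = g (t + h)) by (apply He; split; [lra| eapply Rlt_le_trans; [apply Hh'| apply Rmin_l]]).
  assert (E0 : f t = g t) by (pose proof (He 0 ltac:(lra)) as X; rewrite Rplus_0_r in X; auto).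
  rewrite E1, E0. apply Hh. split. lra. eapply Rlt_le_trans; [apply Hh'| apply Rmin_r].
Qed.

Lemma dlim_minus_shift f c s l : derivable_pt_lim f (s - c) l -> derivable_pt_lim (fun x => f (x - c)) s l.
Proof.
  intros H. replace l with (l * 1) by ring.
  apply (derivable_pt_lim_comp (fun x => x - c) f s 1 l).
  replace 1 with (1 - 0) by ring. apply derivable_pt_lim_minus. apply derivable_pt_lim_id. apply derivable_pt_lim_const.
  exact H.
Qed.

Lemma ineq_close2 a b X Y P Q D : a <= 0 -> P * P + Q * Q <= D ->
  2 * (X * (a * X - b * Y + P) + Y * (b * X + a * Y + Q)) <= 1 * ((X * X + Y * Y) + D).
Proof. intros. replace (X * (a * X - b * Y + P) + Y * (b * X + a * Y + Q)) with (X * (a * X + P) + Y * (a * Y + Q)) by ring.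
  apply ineq_close; auto. Qed.

Lemma sq_abs_le X c : 0 <= c -> X * X <= c * c -> Rabs X <= c.
Proof. intros Hc H. rewrite <- abs_sq in H. pose proof (Rabs_pos X). nra. Qed.

Lemma ctn_sqd (u v : R -> R*R) t : ctn (fun s => fst (u s)) t -> ctn (fun s => snd (u s)) t ->
  ctn (fun s => fst (v s)) t -> ctn (fun s => snd (v s)) t -> ctn (fun s => sqd (u s) (v s)) t.
Proof. intros. unfold sqd. apply ctn_plus; apply ctn_mult; apply ctn_minus; auto. Qed.

Lemma mb_clp M r dl p : LipB M r dl -> M (0,0) = (0,0) -> 0 <= r -> 0 <= dl ->
  Rabs (fst (M (clp r p))) <= 2 * dl * r /\ Rabs (snd (M (clp r p))) <= 2 * dl * r.
Proof.
  intros HL H0 Hr Hdl. destruct (mbound M r dl (clp r p) HL H0 Hr (clp_inbox r p Hr)) as [A B].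
  destruct (clp_inbox r p Hr) as [C D].
  assert (dl * (Rabs (fst (clp r p)) + Rabs (snd (clp r p))) <= dl * (2 * r)) by (apply Rmult_le_compat_l; lra).
  split; lra.
Qed.

Lemma cfield_lipF a b M r dl u v : 0 <= r -> LipB M r dl -> a <= 0 -> 0 <= dl ->
  2 * ((fst u - fst v) * (fst (cfield a b M r u) - fst (cfield a b M r v)) +
       (snd u - snd v) * (snd (cfield a b M r u) - snd (cfield a b M r v))) <= 4 * dl * (sqd u v + 0).
Proof.
  intros Hr HL Ha Hdl. destruct (HL (clp r u) (clp r v) (clp_inbox r u Hr) (clp_inbox r v Hr)) as [A B].
  pose proof (d1_clp r u v Hr).
  assert (dl * d1 (clp r u) (clp r v) <= dl * d1 u v) by (apply Rmult_le_compat_l; auto).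
  unfold cfield, sqd, d1 in *; cbn [fst snd].
  set (X := fst u - fst v) in *. set (Y := snd u - snd v) in *.
  replace (a * fst u - b * snd u + fst (M (clp r u)) - (a * fst v - b * snd v + fst (M (clp r v))))
    with (a * X - b * Y + (fst (M (clp r u)) - fst (M (clp r v)))) by (unfold X, Y; ring).
  replace (b * fst u + a * snd u + snd (M (clp r u)) - (b * fst v + a * snd v + snd (M (clp r v))))
    with (b * X + a * Y + (snd (M (clp r u)) - snd (M (clp r v)))) by (unfold X, Y; ring).
  rewrite Rplus_0_r. apply ineq_lip; auto; lra.
Qed.

Definition Lsc a b k eps t : R*R := (eps * fst (Lsol a b k t), eps * snd (Lsol a b k t)).
Definition linf a b (p : R*R) : R*R := (a * fst p - b * snd p, b * fst p + a * snd p).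

Lemma Lsc_deriv a b k eps t :
  derivable_pt_lim (fun s => fst (Lsc a b k eps s)) t (fst (linf a b (Lsc a b k eps t))) /\
  derivable_pt_lim (fun s => snd (Lsc a b k eps s)) t (snd (linf a b (Lsc a b k eps t))).
Proof.
  destruct (Lsol_deriv a b k t) as [A B]. unfold Lsc, linf; cbn [fst snd]. split.
  - replace (a * (eps * fst (Lsol a b k t)) - b * (eps * snd (Lsol a b k t))) with
      (eps * (a * fst (Lsol a b k t) - b * snd (Lsol a b k t))) by ring.
    apply (derivable_pt_lim_scal (fun s => fst (Lsol a b k s))); auto.
  - replace (b * (eps * fst (Lsol a b k t)) + a * (eps * snd (Lsol a b k t))) with
      (eps * (b * fst (Lsol a b k t) + a * snd (Lsol a b k t))) by ring.
    apply (derivable_pt_lim_scal (fun s => snd (Lsol a b k s))); auto.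
Qed.

Lemma flow_phase1 a b k M R0 te t1 m c0 eta1 dl eps :
 a < 0 -> 0 < b -> 0 < k -> M (0,0) = (0,0) ->
 R0 = sqrt (1 + k^2) ->
 0 < t1 -> t1 < te ->
 (forall t, 0 <= t <= t1 -> b * fst (Lsol a b k t) + a * snd (Lsol a b k t) <= - c0) ->
 snd (Lsol a b k te) = 1 + m -> 0 < m -> 0 < c0 ->
 0 < eta1 -> eta1 <= 1/2 -> eta1 <= m/4 -> (b - a) * eta1 <= c0/4 ->
 0 < dl -> dl <= 1 -> 2 * dl * (R0 + 2) <= c0/4 -> 8 * (dl * dl) * ((R0+2) * (R0 + 2)) * exp (te+1) <= eta1 * eta1 ->
 0 < eps -> LipB M (eps * (R0+2)) dl ->
 forall phi : R -> R*R, phi 0 = (- k * eps, eps) ->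
 (forall t, 0 <= t -> derivable_pt_lim (fun s => fst (phi s)) t (fst (cfield a b M (eps * (R0+2)) (phi t))) /\
                     derivable_pt_lim (fun s => snd (phi s)) t (snd (cfield a b M (eps * (R0+2)) (phi t)))) ->
 (forall t, 0 <= t < te + 1 -> Rabs (fst (phi t) - eps * fst (Lsol a b k t)) <= eps * eta1 /\
                               Rabs (snd (phi t) - eps * snd (Lsol a b k t)) <= eps * eta1) /\
 (forall t, 0 < t <= t1 -> snd (phi t) < eps).
Proof.
  intros Ha Hb Hk HM0 HR0 Ht1 Ht1e HLd Hm Hm0 Hc0 He1 He2 He3 He4 Hdl Hdl1 Hdl2 Hdl3 Heps HL phi Hp0 Hphi.
  set (Rb := R0 + 2) in *. set (r := eps * Rb) in *.
  assert (HR0p : 0 < R0) by (rewrite HR0; apply sqrt_pos1).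
  assert (Hr : 0 <= r) by (unfold r, Rb; nra).
  set (D := 8 * (dl * dl) * (eps * eps) * (Rb * Rb)).
  assert (HD : 0 <= D) by (unfold D; assert (0 <= dl*dl) by nra; assert (0 <= eps*eps) by nra; assert (0 <= Rb*Rb) by nra;
    apply Rmult_le_pos; [apply Rmult_le_pos|]; [apply Rmult_le_pos|..]; lra).
  assert (Hcl : forall t, 0 <= t < te + 1 -> sqd (phi t) (Lsc a b k eps t) <= (eps * eta1) * (eps * eta1)).
  { intros t Ht. destruct (Req_dec t 0) as [Z|NZ].
    - subst. rewrite Hp0. unfold Lsc. rewrite Lsol_0. unfold sqd; cbn [fst snd].
      assert (0 <= (eps*eta1)*(eps*eta1)) by nra. 
      replace (- k * eps - eps * - k) with 0 by ring. replace (eps - eps * 1) with 0 by ring. lra.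
    - assert (Hc := compare phi (Lsc a b k eps) (cfield a b M r) (linf a b) 1 D 0 (te + 1) ltac:(lra) HD ltac:(lra)).
      assert (Hd : forall t, 0 < t < te + 1 ->
        derivable_pt_lim (fun s => fst (phi s)) t (fst (cfield a b M r (phi t))) /\
        derivable_pt_lim (fun s => snd (phi s)) t (snd (cfield a b M r (phi t))) /\
        derivable_pt_lim (fun s => fst (Lsc a b k eps s)) t (fst (linf a b (Lsc a b k eps t))) /\
        derivable_pt_lim (fun s => snd (Lsc a b k eps s)) t (snd (linf a b (Lsc a b k eps t))) /\
        2 * ((fst (phi t) - fst (Lsc a b k eps t)) * (fst (cfield a b M r (phi t)) - fst (linf a b (Lsc a b k eps t))) +
             (snd (phi t) - snd (Lsc a b k eps t)) * (snd (cfield a b M r (phi t)) - snd (linf a b (Lsc a b k eps t))))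
          <= 1 * (sqd (phi t) (Lsc a b k eps t) + D)).
      { intros s Hs. destruct (Hphi s ltac:(lra)) as [A B]. destruct (Lsc_deriv a b k eps s) as [C E].
        do 4 (split; auto).
        destruct (mb_clp M r dl (phi s) HL HM0 Hr ltac:(lra)) as [P Q].
        unfold cfield, linf, sqd; cbn [fst snd].
        set (X := fst (phi s) - fst (Lsc a b k eps s)). set (Y := snd (phi s) - snd (Lsc a b k eps s)).
        replace (a * fst (phi s) - b * snd (phi s) + fst (M (clp r (phi s))) - (a * fst (Lsc a b k eps s) - b * snd (Lsc a b k eps s)))
          with (a * X - b * Y + fst (M (clp r (phi s)))) by (unfold X, Y; ring).
        replace (b * fst (phi s) + a * snd (phi s) + snd (M (clp r (phi s))) - (b * fst (Lsc a b k eps s) + a * snd (Lsc a b k eps s)))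
          with (b * X + a * Y + snd (M (clp r (phi s)))) by (unfold X, Y; ring).
        apply ineq_close2. lra.
        rewrite <- (abs_sq (fst (M (clp r (phi s))))), <- (abs_sq (snd (M (clp r (phi s))))).
        pose proof (Rabs_pos (fst (M (clp r (phi s))))). pose proof (Rabs_pos (snd (M (clp r (phi s))))).
        assert (Rabs (fst (M (clp r (phi s)))) * Rabs (fst (M (clp r (phi s)))) <= (2*dl*r)*(2*dl*r)) by nra.
        assert (Rabs (snd (M (clp r (phi s)))) * Rabs (snd (M (clp r (phi s)))) <= (2*dl*r)*(2*dl*r)) by nra.
        unfold D, r in *. nra. }
      assert (Hrc : rcont (fun s => sqd (phi s) (Lsc a b k eps s)) 0).
      { apply ctn_rcont. destruct (Hphi 0 ltac:(lra)) as [A B]. destruct (Lsc_deriv a b k eps 0) as [C E].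
        apply ctn_sqd; eapply dlim_ctn; eauto. }
      specialize (Hc Hd Hrc t ltac:(lra)).
      assert (E0 : sqd (phi 0) (Lsc a b k eps 0) = 0).
      { rewrite Hp0. unfold Lsc. rewrite Lsol_0. unfold sqd; cbn [fst snd]. ring. }
      rewrite E0, Rplus_0_l, Rmult_1_l, Rminus_0_r in Hc.
      assert (exp t <= exp (te + 1)) by (apply exp_le_mono; lra).
      assert (D * exp (te + 1) <= eps * eps * (eta1 * eta1)).
      { unfold D. replace (8 * (dl * dl) * (eps * eps) * (Rb * Rb) * exp (te + 1)) with
          ((eps * eps) * (8 * (dl * dl) * (Rb * Rb) * exp (te + 1))) by ring.
        apply Rmult_le_compat_l. nra. exact Hdl3. }
      assert (D * exp t <= D * exp (te + 1)) by (apply Rmult_le_compat_l; auto).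
      nra. }
  assert (Hco : forall t, 0 <= t < te + 1 -> Rabs (fst (phi t) - eps * fst (Lsol a b k t)) <= eps * eta1 /\
                               Rabs (snd (phi t) - eps * snd (Lsol a b k t)) <= eps * eta1).
  { intros t Ht. specialize (Hcl t Ht). unfold sqd, Lsc in Hcl; cbn [fst snd] in Hcl.
    assert (0 <= eps * eta1) by nra.
    split; apply sq_abs_le; auto.
    pose proof (Rle_0_sqr (snd (phi t) - eps * snd (Lsol a b k t))). unfold Rsqr in *. lra.
    pose proof (Rle_0_sqr (fst (phi t) - eps * fst (Lsol a b k t))). unfold Rsqr in *. lra. }
  split; auto.
  intros t Ht.
  destruct (MVT_cor2 (fun s => snd (phi s)) (fun s => snd (cfield a b M r (phi s))) 0 t ltac:(lra)) as [c [Ec Hc]].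
  { intros c Hc. apply Hphi. lra. }
  assert (Hneg : snd (cfield a b M r (phi c)) < 0).
  { destruct (Hco c ltac:(lra)) as [A B]. specialize (HLd c ltac:(lra)).
    destruct (mb_clp M r dl (phi c) HL HM0 Hr ltac:(lra)) as [P Q].
    unfold cfield; cbn [fst snd].
    set (X := fst (phi c) - eps * fst (Lsol a b k c)) in *. set (Y := snd (phi c) - eps * snd (Lsol a b k c)) in *.
    replace (b * fst (phi c) + a * snd (phi c) + snd (M (clp r (phi c)))) with
      (eps * (b * fst (Lsol a b k c) + a * snd (Lsol a b k c)) + b * X + a * Y + snd (M (clp r (phi c)))) by (unfold X, Y; ring).
    assert (b * X <= b * (eps * eta1)). { apply Rmult_le_compat_l. lra. pose proof (Rle_abs X). lra. }
    assert (a * Y <= - a * (eps * eta1)). { pose proof (Rle_abs (- Y)). rewrite Rabs_Ropp in H0. nra. }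
    assert (eps * (b * fst (Lsol a b k c) + a * snd (Lsol a b k c)) <= eps * (- c0)) by (apply Rmult_le_compat_l; lra).
    assert (eps * ((b - a) * eta1) <= eps * (c0 / 4)) by (apply Rmult_le_compat_l; lra).
    assert (2 * dl * r <= eps * (c0 / 4)) by (unfold r; replace (2 * dl * (eps * Rb)) with (eps * (2 * dl * Rb)) by ring; apply Rmult_le_compat_l; lra).
    pose proof (Rle_abs (snd (M (clp r (phi c))))). nra. }
  rewrite Hp0 in Ec. cbn [snd] in Ec. nra.
Qed.

Lemma fl_local T t s : 0 < T -> Rabs (s - t) < Rmin (frac T t) (T - frac T t) -> fl T s = fl T t.
Proof.
  intros HT Hs. destruct (fl_is_int T t) as [n Hn]. rewrite Hn. apply fl_unique; auto.
  pose proof (Rmin_l (frac T t) (T - frac T t)). pose proof (Rmin_r (frac T t) (T - frac T t)).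
  unfold frac in *. rewrite Hn in *. unfold Rabs in Hs. destruct Rcase_abs in Hs; split; nra.
Qed.

Lemma fl_right T t h : 0 < T -> 0 <= h < T - frac T t -> fl T (t + h) = fl T t.
Proof.
  intros HT Hh. destruct (fl_is_int T t) as [n Hn]. rewrite Hn. apply fl_unique; auto.
  pose proof (frac_bd T t HT). unfold frac in *. rewrite Hn in *. split; nra.
Qed.

Lemma fl_left T t s : 0 < T -> frac T t = 0 -> t - T < s < t -> fl T s = fl T t - 1.
Proof.
  intros HT Hf Hs. destruct (fl_is_int T t) as [n Hn]. rewrite Hn. rewrite <- minus_IZR. apply fl_unique; auto.
  unfold frac in Hf. rewrite Hn in Hf. rewrite minus_IZR. simpl. split; nra.
Qed.

Lemma frac_small T t : 0 < T -> 0 <= t < T -> frac T t = t.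
Proof. intros HT Ht. unfold frac. replace (fl T t) with (IZR 0). simpl; ring. symmetry; apply fl_unique; auto. simpl. lra. Qed.

Lemma build_cycle a b k M eps r phi T :
  0 < eps -> 0 < T -> 0 <= r ->
  phi 0 = (- k * eps, eps) ->
  (forall t, 0 <= t -> derivable_pt_lim (fun s => fst (phi s)) t (fst (cfield a b M r (phi t))) /\
                      derivable_pt_lim (fun s => snd (phi s)) t (snd (cfield a b M r (phi t)))) ->
  (forall t, 0 <= t < T -> inbox r (phi t)) ->
  snd (phi T) = eps -> (forall t, 0 < t < T -> snd (phi t) < eps) ->
  hybrid_sol a b k M eps (fun t => phi (frac T t)) /\ periodic_sol (fun t => phi (frac T t)) T /\
  one_impact_per_period eps (fun t => phi (frac T t)) T.
Proof.
  intros Heps HT Hr Hp0 Hd Hbox HphT Hbel.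
  assert (Hy : forall t, snd (phi (frac T t)) = eps -> frac T t = 0).
  { intros t Ht. pose proof (frac_bd T t HT). destruct (Req_dec (frac T t) 0); auto.
    specialize (Hbel (frac T t) ltac:(lra)). lra. }
  assert (Hdf : forall t, 0 <= t < T -> derivable_pt_lim (fun s => fst (phi s)) t (fst (field a b M (phi t))) /\
                      derivable_pt_lim (fun s => snd (phi s)) t (snd (field a b M (phi t)))).
  { intros t Ht. rewrite <- (cfield_field a b M r (phi t)) by (apply Hbox; auto). apply Hd; lra. }
  split; [|split].
  - split; [|split; [|split; [|split]]].
    + intros t Ht. pose proof (frac_bd T t HT). destruct (Req_dec (frac T t) 0) as [Z|NZ].
      rewrite Z, Hp0. simpl. lra. left. apply Hbel. lra.
    + intros t Ht Hlt. set (u := frac T t).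
      assert (Hu : 0 < u < T). { pose proof (frac_bd T t HT). destruct (Req_dec u 0) as [Z|NZ].
        unfold u in Z. rewrite Z, Hp0 in Hlt. simpl in Hlt. lra. unfold u in *. lra. }
      assert (Hdd : 0 < Rmin u (T - u)) by (apply Rmin_pos; lra).
      assert (Hloc : forall s, Rabs (s - t) < Rmin u (T - u) -> phi (frac T s) = phi (s - T * fl T t)).
      { intros s Hs. unfold frac. rewrite (fl_local T t s HT Hs). auto. }
      destruct (Hdf u ltac:(lra)) as [D1 D2].
      assert (Et : t - T * fl T t = u) by auto.
      split.
      * apply (dlim_loc _ (fun x => fst (phi (x - T * fl T t))) t _ _ Hdd). intros s Hs; rewrite Hloc; auto.
        apply (dlim_minus_shift (fun y => fst (phi y))). rewrite Et. auto.
      * apply (dlim_loc _ (fun x => snd (phi (x - T * fl T t))) t _ _ Hdd). intros s Hs; rewrite Hloc; auto.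
        apply (dlim_minus_shift (fun y => snd (phi y))). rewrite Et. auto.
    + intros t Ht. set (u := frac T t). pose proof (frac_bd T t HT) as Hu. fold u in Hu.
      assert (Hdd : 0 < T - u) by lra.
      assert (Hloc : forall h, 0 <= h < T - u -> phi (frac T (t + h)) = phi (t + h - T * fl T t)).
      { intros h Hh. unfold frac. rewrite (fl_right T t h HT Hh). auto. }
      destruct (Hdf u ltac:(lra)) as [D1 D2].
      assert (Et : t - T * fl T t = u) by auto.
      split.
      * apply (rd_loc _ (fun x => fst (phi (x - T * fl T t))) t _ _ Hdd). intros h Hh; rewrite Hloc; auto.
        apply dlim_rd. apply (dlim_minus_shift (fun y => fst (phi y))). rewrite Et. auto.
      * apply (rd_loc _ (fun x => snd (phi (x - T * fl T t))) t _ _ Hdd). intros h Hh; rewrite Hloc; auto.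
        apply dlim_rd. apply (dlim_minus_shift (fun y => snd (phi y))). rewrite Et. auto.
    + intros t Ht Heq. rewrite (Hy t Heq), Hp0. auto.
    + intros t Ht Heq. pose proof (Hy t Heq) as Hf. exists (fst (phi T)).
      assert (Hloc : forall s, t - T < s < t -> phi (frac T s) = phi (s - T * (fl T t - 1))).
      { intros s Hs. unfold frac. rewrite (fl_left T t s HT Hf Hs). auto. }
      assert (Et : t - T * (fl T t - 1) = T) by (unfold frac in Hf; lra).
      destruct (Hd T ltac:(lra)) as [D1 D2].
      apply dlim_ctn in D1. apply dlim_ctn in D2.
      split; intros e He; [destruct (D1 e He) as [d [Hd0 Hs]] | destruct (D2 e He) as [d [Hd0 Hs]]];
        exists (Rmin d T); (split; [apply Rmin_pos; lra|]); intros s Hs';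
        assert (Hs2 : t - T < s < t) by (pose proof (Rmin_r d T); lra);
        rewrite (Hloc s Hs2);
        [| rewrite <- HphT];
        apply Hs; pose proof (Rmin_l d T); rewrite Rabs_left; lra.
  - split; auto. intros t Ht. rewrite frac_plusT; auto.
  - exists 0. split. lra. split. rewrite frac_small by lra. rewrite Hp0; auto.
    intros s Hs Heq. rewrite frac_small in Heq by lra. destruct (Req_dec s 0); auto.
    specialize (Hbel s ltac:(lra)). lra.
Qed.

Lemma frac_plus_nT T x n : 0 < T -> frac T (x + INR n * T) = frac T x.
Proof.
  intros HT. induction n. simpl. rewrite Rmult_0_l, Rplus_0_r. auto.
  rewrite S_INR. replace (x + (INR n + 1) * T) with ((x + INR n * T) + T) by ring.
  rewrite frac_plusT; auto.
Qed.

Lemma fl_nat T x : 0 < T -> 0 <= x -> exists n : nat, fl T x = INR n.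
Proof.
  intros HT Hx. destruct (fl_is_int T x) as [z Hz]. pose proof (fl_nonneg T x HT Hx). rewrite Hz in *.
  apply le_IZR in H. exists (Z.to_nat z). rewrite INR_IZR_INZ. rewrite Z2Nat.id; auto.
Qed.

Lemma nat_above T x : 0 < T -> exists n : nat, x <= INR n * T.
Proof.
  intros HT. destruct (archimed (Rabs x / T)) as [A _].
  assert (0 <= Rabs x / T) by (apply Rdiv_le_0_compat; [apply Rabs_pos| lra]).
  assert (Hz : (0 <= up (Rabs x / T))%Z) by (apply le_IZR; simpl; lra).
  exists (Z.to_nat (up (Rabs x / T))). rewrite INR_IZR_INZ, Z2Nat.id by auto.
  pose proof (Rle_abs x). apply Rle_trans with (Rabs x). auto.
  apply Rmult_le_reg_r with (/ T). apply Rinv_0_lt_compat; lra.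
  replace (IZR (up (Rabs x / T)) * T * / T) with (IZR (up (Rabs x / T))) by (field; lra).
  unfold Rdiv in A. lra.
Qed.

Lemma post_impact a b k M eps r dl w phi T t1 :
  a < 0 -> 0 <= dl -> 0 < eps -> eps <= r -> LipB M r dl -> hybrid_sol a b k M eps w ->
  0 < T -> phi 0 = (- k * eps, eps) ->
  (forall t, 0 <= t -> derivable_pt_lim (fun s => fst (phi s)) t (fst (cfield a b M r (phi t))) /\
                      derivable_pt_lim (fun s => snd (phi s)) t (snd (cfield a b M r (phi t)))) ->
  (forall t, 0 <= t < T -> inbox (r - eps) (phi t)) ->
  snd (phi T) = eps -> (forall t, 0 < t < T -> snd (phi t) < eps) ->
  snd (field a b M (- k * eps, eps)) < 0 ->
  0 <= t1 -> w t1 = (- k * eps, eps) ->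
  forall s, 0 <= s -> w (t1 + s) = phi (frac T s).
Proof.
  intros Ha Hdl Heps Hr HL Hw HT Hp0 Hd Hbox HphT Hbel Hneg Ht1 Hw1.
  assert (Hstep : forall t0, 0 <= t0 -> w t0 = (- k * eps, eps) ->
     (forall u, 0 <= u < T -> w (t0 + u) = phi u) /\ w (t0 + T) = (- k * eps, eps)).
  { intros t0 Ht0 Hwt0.
    assert (H0 : exists h, 0 < h /\ forall s, 0 < s < h -> snd (w (t0 + s)) < eps).
    { destruct Hw as [_ [_ [Hw3 _]]]. destruct (Hw3 t0 Ht0) as [_ R2]. rewrite Hwt0 in R2.
      set (l := snd (field a b M (- k * eps, eps))) in *.
      destruct (R2 (- l / 2) ltac:(lra)) as [d [Hd0 Hh]]. exists d. split; auto. intros s Hs.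
      specialize (Hh s Hs). rewrite Hwt0 in Hh. cbn [snd] in Hh.
      assert ((snd (w (t0 + s)) - eps) / s < l / 2). { pose proof (Rle_abs ((snd (w (t0 + s)) - eps) / s - l)). lra. }
      assert (snd (w (t0 + s)) - eps < 0). { apply Rmult_lt_reg_r with (/ s). apply Rinv_0_lt_compat; lra.
        rewrite Rmult_0_l. unfold Rdiv in H. lra. } lra. }
    assert (Hf := follow a b k M eps r eps dl w t0 phi T Ha Hdl Heps Hr HL Hw Ht0 HT
      ltac:(rewrite Hp0, Hwt0; auto) Hd Hbel Hbox H0).
    split; auto.
    destruct Hw as [Hw1' [Hw2 [Hw3 [Hw4 Hw5]]]].
    destruct (Hw1' (t0 + T) ltac:(lra)) as [Hlt|Heq].
    - exfalso. destruct (Hw2 (t0 + T) ltac:(lra) Hlt) as [_ D2].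
      destruct (Hd T ltac:(lra)) as [_ D4].
      assert (snd (w (t0 + T)) = snd (phi T)).
      { apply (ctn_left_eq (fun x => snd (w (t0 + x))) (fun x => snd (phi x)) T T); auto.
        exact (dlim_ctn _ _ _ (dlim_shift (fun y => snd (w y)) t0 T _ D2)).
        eapply dlim_ctn; eauto. intros x Hx. rewrite Hf; auto. lra. }
      lra.
    - apply pair_eq; simpl; auto. apply Hw4; auto; lra. }
  assert (Hn : forall n : nat, w (t1 + INR n * T) = (- k * eps, eps) /\
       forall u, 0 <= u < T -> w (t1 + INR n * T + u) = phi u).
  { induction n.
    - simpl. rewrite Rmult_0_l, Rplus_0_r. split; auto. apply Hstep; auto.
    - destruct IHn as [A _]. rewrite S_INR.
      replace (t1 + (INR n + 1) * T) with (t1 + INR n * T + T) by ring.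
      assert (0 <= INR n) by apply pos_INR.
      destruct (Hstep (t1 + INR n * T) ltac:(nra) A) as [_ B].
      split; auto. apply Hstep; auto. nra. }
  intros s Hs. destruct (fl_nat T s HT Hs) as [n Hfn].
  destruct (Hn n) as [_ B]. pose proof (frac_bd T s HT).
  rewrite <- B by auto. f_equal. unfold frac. rewrite Hfn. ring.
Qed.

Lemma sqd_dist2 p q : sqd p q = (dist2 p q) * (dist2 p q).
Proof. unfold dist2, sqd. rewrite sqrt_sqrt. ring. pose proof (pow2_ge_0 (fst p - fst q)). pose proof (pow2_ge_0 (snd p - snd q)). lra. Qed.

Lemma ft_stab a b k M eps r dl phi T te gam :
  a < 0 -> 0 < dl -> dl <= 1 -> 0 < eps -> eps <= r -> LipB M r dl -> 0 < gam ->
  0 < T -> T <= te -> phi 0 = (- k * eps, eps) ->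
  (forall t, 0 <= t -> derivable_pt_lim (fun s => fst (phi s)) t (fst (cfield a b M r (phi t))) /\
                      derivable_pt_lim (fun s => snd (phi s)) t (snd (cfield a b M r (phi t)))) ->
  (forall t, 0 <= t <= te -> inbox (r - eps - eps * gam) (phi t)) ->
  eps + eps * gam < snd (phi te) ->
  snd (phi T) = eps -> (forall t, 0 < t < T -> snd (phi t) < eps) ->
  snd (field a b M (- k * eps, eps)) < 0 ->
  ft_stable a b k M eps (fun t => phi (frac T t)).
Proof.
  intros Ha Hdl Hdl1 Heps Hr HL Hgam HT HTte Hp0 Hd Hbx Hte HphT Hbel Hneg.
  assert (Hr0 : 0 <= r) by lra.
  assert (Hbox : forall t, 0 <= t < T -> inbox (r - eps) (phi t)).
  { intros t Ht. destruct (Hbx t ltac:(lra)). assert (0 < eps * gam) by nra. split; lra. }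
  set (delta := eps * gam / exp (2 * (te + 1))).
  assert (Hdel : 0 < delta) by (unfold delta; apply Rdiv_lt_0_compat; [nra| apply exp_pos]).
  exists delta. split; auto.
  intros p w [s [Hs Hdist]] Hw Hst.
  assert (PI := fun t1 => post_impact a b k M eps r dl w phi T t1 Ha ltac:(lra) Heps Hr HL Hw HT Hp0 Hd Hbox HphT Hbel Hneg).
  assert (Hfin : forall t1, 0 <= t1 -> w t1 = (- k * eps, eps) ->
     exists t1 c, 0 <= t1 /\ 0 <= c /\ forall t, t1 <= t -> w t = phi (frac T (t + c))).
  { intros t1 Ht1 Hwt1. destruct (nat_above T t1 HT) as [N HN].
    exists t1, (INR N * T - t1). split; auto. split. lra.
    intros t Ht. replace t with (t1 + (t - t1)) at 1 by ring. rewrite (PI t1 Ht1 Hwt1 (t - t1)) by lra.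
    replace (t + (INR N * T - t1)) with ((t - t1) + INR N * T) by ring. rewrite frac_plus_nT; auto. }
  destruct Hst as [[Hpy Hw0]|[Hpy Hw0]].
  2:{ apply (Hfin 0); auto; lra. }
  set (s' := frac T s). pose proof (frac_bd T s HT) as Hs'. fold s' in Hs'.
  set (K := Rabs a + Rabs b + 2 * dl + 1).
  assert (HK : 0 < K) by (unfold K; pose proof (Rabs_pos a); pose proof (Rabs_pos b); lra).
  destruct (flow_exists (cfield a b M r) K p HK (cfield_lip a b M r dl Hr0 ltac:(lra) HL)) as [psi [Hps0 Hpsd]].
  set (t2 := te + 1 - s').
  assert (Hcmp : forall x, 0 <= x < t2 -> sqd (psi x) (phi (s' + x)) <= (eps * gam) * (eps * gam)).
  { assert (H0 : sqd (psi 0) (phi (s' + 0)) < delta * delta).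
    { rewrite Rplus_0_r, Hps0, sqd_dist2. pose proof (dist2 p (phi s')) as _.
      assert (0 <= dist2 p (phi s')) by (unfold dist2; apply sqrt_pos).
      fold s' in Hdist. nra. }
    assert (Hdd : delta * delta * exp (4 * (te + 1)) = (eps * gam) * (eps * gam)).
    { unfold delta. replace (4 * (te + 1)) with (2 * (te + 1) + 2 * (te + 1)) by ring. rewrite exp_plus.
      field. apply Rgt_not_eq, exp_pos. }
    intros x Hx. destruct (Req_dec x 0) as [Z|NZ].
    - subst. assert (0 <= exp (4 * (te + 1)) - 1).
      { assert (exp 0 <= exp (4 * (te+1))) by (apply exp_le_mono; lra). rewrite exp_0 in H. lra. }
      assert (delta * delta <= delta * delta * exp (4 * (te + 1))). { assert (0 <= delta*delta) by nra. nra. } lra.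
    - assert (Hc := compare psi (fun x => phi (s' + x)) (cfield a b M r) (cfield a b M r) (4 * dl) 0 0 t2
        ltac:(lra) ltac:(lra) ltac:(unfold t2; lra)).
      assert (Hdv : forall t, 0 < t < t2 ->
        derivable_pt_lim (fun s0 => fst (psi s0)) t (fst (cfield a b M r (psi t))) /\
        derivable_pt_lim (fun s0 => snd (psi s0)) t (snd (cfield a b M r (psi t))) /\
        derivable_pt_lim (fun s0 => fst ((fun x => phi (s' + x)) s0)) t (fst (cfield a b M r ((fun x => phi (s' + x)) t))) /\
        derivable_pt_lim (fun s0 => snd ((fun x => phi (s' + x)) s0)) t (snd (cfield a b M r ((fun x => phi (s' + x)) t))) /\
        2 * ((fst (psi t) - fst ((fun x => phi (s' + x)) t)) * (fst (cfield a b M r (psi t)) - fst (cfield a b M r ((fun x => phi (s' + x)) t))) +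
             (snd (psi t) - snd ((fun x => phi (s' + x)) t)) * (snd (cfield a b M r (psi t)) - snd (cfield a b M r ((fun x => phi (s' + x)) t))))
          <= 4 * dl * (sqd (psi t) ((fun x => phi (s' + x)) t) + 0)).
      { intros t Ht. destruct (Hpsd t ltac:(lra)) as [A B]. destruct (Hd (s' + t) ltac:(lra)) as [C D].
        split; auto. split; auto. split. exact (dlim_shift (fun y => fst (phi y)) s' t _ C).
        split. exact (dlim_shift (fun y => snd (phi y)) s' t _ D).
        apply cfield_lipF; auto; lra. }
      assert (Hrc : rcont (fun s0 => sqd (psi s0) ((fun x => phi (s' + x)) s0)) 0).
      { apply ctn_rcont. destruct (Hpsd 0 ltac:(lra)) as [A B]. destruct (Hd (s' + 0) ltac:(lra)) as [C D].
        apply ctn_sqd; eapply dlim_ctn; eauto.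
        exact (dlim_shift (fun y => fst (phi y)) s' 0 _ C). exact (dlim_shift (fun y => snd (phi y)) s' 0 _ D). }
      specialize (Hc Hdv Hrc x ltac:(lra)). cbv beta in Hc. rewrite !Rplus_0_r in Hc.
      rewrite Rplus_0_r in H0.
      assert (exp (4 * dl * (x - 0)) <= exp (4 * (te + 1))).
      { apply exp_le_mono. unfold t2 in Hx. assert (x <= te + 1) by lra. nra. }
      assert (0 <= sqd (psi 0) (phi s')) by apply sqd_pos.
      assert (exp (4 * dl * (x - 0)) * sqd (psi 0) (phi s') <= exp (4 * (te + 1)) * (delta * delta)).
      { apply Rmult_le_compat; try lra. left; apply exp_pos. }
      lra. }
  assert (Hco : forall x, 0 <= x < t2 -> Rabs (fst (psi x) - fst (phi (s' + x))) <= eps * gam /\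
                                         Rabs (snd (psi x) - snd (phi (s' + x))) <= eps * gam).
  { intros x Hx. specialize (Hcmp x Hx). unfold sqd in Hcmp. assert (0 <= eps * gam) by nra.
    split; apply sq_abs_le; auto.
    pose proof (Rle_0_sqr (snd (psi x) - snd (phi (s' + x)))). unfold Rsqr in *. lra.
    pose proof (Rle_0_sqr (fst (psi x) - fst (phi (s' + x)))). unfold Rsqr in *. lra. }
  assert (Hte' : eps < snd (psi (te - s'))).
  { destruct (Hco (te - s') ltac:(unfold t2; lra)) as [_ B]. replace (s' + (te - s')) with te in B by ring.
    pose proof (Rle_abs (snd (phi te) - snd (psi (te - s')))). rewrite Rabs_minus_sym in B. lra. }
  destruct (first_hit (fun x => snd (psi x)) 0 (te - s') eps ltac:(lra)) as [tau [Htau [Hpt Hpb]]].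
  { intros x Hx. destruct (Hpsd x ltac:(lra)) as [_ B]. eapply dlim_ctn; eauto. }
  { cbv beta. rewrite Hps0. auto. }
  { cbv beta. lra. }
  cbv beta in Hpt, Hpb.
  assert (Hwy0 : exists h, 0 < h /\ forall x, 0 < x < h -> snd (w (0 + x)) < eps).
  { destruct Hw as [_ [_ [Hw3 _]]]. destruct (Hw3 0 ltac:(lra)) as [_ R2]. apply rd_rcont in R2.
    destruct (R2 (eps - snd p) ltac:(lra)) as [d [Hd0 Hh]].
    exists d. split; auto. intros x Hx. specialize (Hh x Hx). rewrite Hw0 in Hh.
    pose proof (Rle_abs (snd (w (0 + x)) - snd p)). lra. }
  assert (Hfol := follow a b k M eps r eps dl w 0 psi tau Ha ltac:(lra) Heps Hr HL Hw ltac:(lra) ltac:(lra)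
    ltac:(rewrite Hps0, Hw0; auto) Hpsd ltac:(intros x Hx; apply Hpb; lra)).
  assert (Hfol2 : forall x, 0 <= x < tau -> w x = psi x).
  { intros x Hx. replace x with (0 + x) at 1 by ring. apply Hfol; auto.
    intros y Hy. destruct (Hco y ltac:(unfold t2; lra)) as [A B]. destruct (Hbx (s' + y) ltac:(lra)) as [C D].
    split; pose proof (Rabs_triang_inv (fst (psi y)) (fst (phi (s' + y))));
      pose proof (Rabs_triang_inv (snd (psi y)) (snd (phi (s' + y)))); lra. }
  destruct Hw as [Hw1' [Hw2 [Hw3 [Hw4 Hw5]]]].
  assert (Hwt : snd (w tau) = eps).
  { destruct (Hw1' tau ltac:(lra)) as [Hlt|Heq]; auto. exfalso.
    destruct (Hw2 tau ltac:(lra) Hlt) as [_ D2]. destruct (Hpsd tau ltac:(lra)) as [_ D4].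
    assert (snd (w tau) = snd (psi tau)).
    { apply (ctn_left_eq (fun x => snd (w x)) (fun x => snd (psi x)) tau tau); try lra.
      eapply dlim_ctn; eauto. eapply dlim_ctn; eauto. intros x Hx. rewrite Hfol2; auto. lra. }
    lra. }
  apply (Hfin tau). lra. apply pair_eq; simpl; auto. apply Hw4; auto. lra.
Qed.

Lemma per_eps a b k M R0 te t1 m c0 eta1 dl gam eps :
 a < 0 -> 0 < b -> 0 < k -> M (0,0) = (0,0) ->
 R0 = sqrt (1 + k^2) ->
 0 < t1 -> t1 < te ->
 (forall t, 0 <= t <= t1 -> b * fst (Lsol a b k t) + a * snd (Lsol a b k t) <= - c0) ->
 snd (Lsol a b k te) = 1 + m -> 0 < m -> 0 < c0 -> a - b * k <= - c0 ->
 0 < eta1 -> eta1 <= 1/2 -> eta1 <= m/4 -> (b - a) * eta1 <= c0/4 ->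
 0 < dl -> dl <= 1 -> 2 * dl * (R0 + 2) <= c0/4 -> 8 * (dl * dl) * ((R0+2) * (R0 + 2)) * exp (te+1) <= eta1 * eta1 ->
 dl * (k + 1) < c0 -> gam = Rmin (1/2) (m/2) ->
 0 < eps -> LipB M (eps * (R0+2)) dl ->
 exists z T, ft_stable_cycle_one_impact a b k M eps z T /\ forall t, 0 <= t -> inbox (eps * (R0 + 1)) (z t).
Proof.
  intros Ha Hb Hk HM0 HR0 Ht1 Ht1e HLd Hm Hm0 Hc0 Hc0' He1 He2 He3 He4 Hdl Hdl1 Hdl2 Hdl3 Hdl4 Hgam Heps HL.
  set (r := eps * (R0 + 2)).
  assert (HR0p : 0 < R0) by (rewrite HR0; apply sqrt_pos1).
  assert (Hr0 : 0 <= r) by (unfold r; nra).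
  set (K := Rabs a + Rabs b + 2 * dl + 1).
  assert (HK : 0 < K) by (unfold K; pose proof (Rabs_pos a); pose proof (Rabs_pos b); lra).
  destruct (flow_exists (cfield a b M r) K (- k * eps, eps) HK (cfield_lip a b M r dl Hr0 ltac:(lra) HL)) as [phi [Hp0 Hpd]].
  destruct (flow_phase1 a b k M R0 te t1 m c0 eta1 dl eps Ha Hb Hk HM0 HR0 Ht1 Ht1e HLd Hm Hm0 Hc0 He1 He2 He3 He4
     Hdl Hdl1 Hdl2 Hdl3 Heps HL phi Hp0 Hpd) as [Hco Hlow].
  assert (Hgam1 : gam <= 1/2) by (rewrite Hgam; apply Rmin_l).
  assert (Hgam2 : gam <= m/2) by (rewrite Hgam; apply Rmin_r).
  assert (Hgam0 : 0 < gam) by (rewrite Hgam; apply Rmin_pos; lra).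
  assert (Hbx : forall t, 0 <= t <= te -> inbox (r - eps - eps * gam) (phi t)).
  { intros t Ht. destruct (Hco t ltac:(lra)) as [A B]. destruct (Lsol_bd a b k t Ha ltac:(lra)) as [C D].
    rewrite <- HR0 in C, D.
    assert (Rabs (eps * fst (Lsol a b k t)) <= eps * R0) by (rewrite Rabs_mult, Rabs_right by lra; apply Rmult_le_compat_l; lra).
    assert (Rabs (eps * snd (Lsol a b k t)) <= eps * R0) by (rewrite Rabs_mult, Rabs_right by lra; apply Rmult_le_compat_l; lra).
    assert (eps * eta1 <= eps * (1/2)) by (apply Rmult_le_compat_l; lra).
    assert (eps * gam <= eps * (1/2)) by (apply Rmult_le_compat_l; lra).
    unfold r. split.
    - pose proof (Rabs_triang_inv (fst (phi t)) (eps * fst (Lsol a b k t))). lra.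
    - pose proof (Rabs_triang_inv (snd (phi t)) (eps * snd (Lsol a b k t))). lra. }
  assert (Hte : eps + eps * gam < snd (phi te)).
  { destruct (Hco te ltac:(lra)) as [_ B]. rewrite Hm in B.
    pose proof (Rle_abs (eps * (1 + m) - snd (phi te))). rewrite Rabs_minus_sym in B.
    assert (eps * eta1 <= eps * (m/4)) by (apply Rmult_le_compat_l; lra).
    assert (eps * gam <= eps * (m/2)) by (apply Rmult_le_compat_l; lra).
    assert (0 < eps * m) by nra. nra. }
  destruct (first_hit (fun x => snd (phi x)) t1 te eps Ht1e) as [T [HT [HphT HTb]]].
  { intros x Hx. destruct (Hpd x ltac:(lra)) as [_ B]. eapply dlim_ctn; eauto. }
  { cbv beta. apply Hlow. lra. }
  { cbv beta. assert (0 <= eps * gam) by nra. lra. }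
  cbv beta in HphT, HTb.
  assert (Hbel : forall t, 0 < t < T -> snd (phi t) < eps).
  { intros t Ht. destruct (Rle_dec t t1). apply Hlow; lra. apply HTb; lra. }
  assert (Hbox : forall t, 0 <= t < T -> inbox r (phi t)).
  { intros t Ht. destruct (Hbx t ltac:(lra)). assert (0 <= eps * gam) by nra. split; lra. }
  assert (Hneg : snd (field a b M (- k * eps, eps)) < 0).
  { assert (Hin : inbox r (- k * eps, eps)).
    { assert (k <= R0). { assert (Hkk : k * k <= 1 + k^2) by (simpl; nra). apply sqrt_le_1_alt in Hkk. rewrite sqrt_square in Hkk by lra. rewrite HR0. exact Hkk. }
      assert (eps * k <= eps * R0) by (apply Rmult_le_compat_l; lra). unfold r. split; cbn [fst snd]. rewrite Rabs_left by nra. lra. rewrite Rabs_right by lra. nra. }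
    destruct (mbound M r dl (- k * eps, eps) HL HM0 Hr0 Hin) as [_ B].
    unfold field; cbn [fst snd] in *. rewrite (Rabs_left (- k * eps)) in B by nra. rewrite (Rabs_right eps) in B by lra.
    pose proof (Rle_abs (snd (M (- k * eps, eps)))).
    assert (dl * (- (- k * eps) + eps) = eps * (dl * (k + 1))) by ring.
    assert (eps * (dl * (k + 1)) < eps * c0) by (apply Rmult_lt_compat_l; lra).
    assert (eps * (a - b * k) <= eps * (- c0)) by (apply Rmult_le_compat_l; lra).
    nra. }
  exists (fun t => phi (frac T t)), T.
  assert (HT0 : 0 < T) by lra.
  destruct (build_cycle a b k M eps r phi T Heps HT0 Hr0 Hp0 Hpd Hbox HphT Hbel) as [B1 [B2 B3]].
  split. split; [auto| split; [auto| split; [auto|]]].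
  - apply (ft_stab a b k M eps r dl phi T te gam); auto; try lra.
    unfold r; nra.
  - intros t Ht. pose proof (frac_bd T t HT0). destruct (Hbx (frac T t) ltac:(lra)) as [A B].
    assert (0 <= eps * gam) by nra. unfold r in *. split; lra.
Qed.

Theorem mainTheorem3 (a b k : R) (M : R * R -> R * R) :
  a < 0 -> 0 < b -> 0 < k ->
  C2_map M ->
  M (0, 0) = (0, 0) ->
  derivable_pt_lim (fun u => fst (M (u, 0))) 0 0 ->
  derivable_pt_lim (fun v => fst (M (0, v))) 0 0 ->
  derivable_pt_lim (fun u => snd (M (u, 0))) 0 0 ->
  derivable_pt_lim (fun v => snd (M (0, v))) 0 0 ->
  a / b * (3 * PI / 2) - a / b * arccot (- k) + / 2 * ln (1 + k ^ 2) >
  a / b * (- (PI / 2)) - a / b * arccot (- (a / b)) + / 2 * ln (1 + (a / b) ^ 2) ->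
  exists eps0, 0 < eps0 /\
    exists (z : R -> R -> R * R) (T : R -> R),
      (forall eps, 0 < eps < eps0 ->
         ft_stable_cycle_one_impact a b k M eps (z eps) (T eps)) /\
      (forall eta, 0 < eta -> exists d, 0 < d /\
         forall eps t, 0 < eps < Rmin d eps0 -> 0 <= t ->
           dist2 (z eps t) (0, 0) < eta).
Proof.
  intros Ha Hb Hk HC2 HM0 H1 H2 H3 H4 Hineq.
  set (R0 := sqrt (1 + k^2)).
  assert (HR0 : 0 < R0) by apply sqrt_pos1.
  set (Rb := R0 + 2).
  set (te0 := te a b k).
  assert (Hte0 : 0 < te0) by (apply te_pos; auto).
  set (m := snd (Lsol a b k te0) - 1).
  assert (Hm : 0 < m) by (unfold m, te0; pose proof (Lsol_te a b k Ha Hb Hineq); lra).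
  set (c0 := (b * k - a) / 2).
  assert (Hc0 : 0 < c0) by (unfold c0; nra).
  assert (Hg : ctn (fun t => b * fst (Lsol a b k t) + a * snd (Lsol a b k t)) 0).
  { destruct (Lsol_deriv a b k 0) as [A B]. apply dlim_ctn in A. apply dlim_ctn in B.
    apply ctn_plus; apply ctn_mult; auto; apply ctn_const. }
  destruct (Hg c0 Hc0) as [d [Hd Hds]].
  set (t1 := Rmin (d / 2) (te0 / 2)).
  assert (Ht1 : 0 < t1) by (unfold t1; apply Rmin_pos; lra).
  assert (Ht1e : t1 < te0) by (unfold t1; pose proof (Rmin_r (d/2) (te0/2)); lra).
  assert (HLd : forall t, 0 <= t <= t1 -> b * fst (Lsol a b k t) + a * snd (Lsol a b k t) <= - c0).
  { intros t Ht. assert (Rabs (t - 0) < d) by (rewrite Rminus_0_r, Rabs_right by lra; pose proof (Rmin_l (d/2) (te0/2)); unfold t1 in Ht; lra).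
    specialize (Hds t H). rewrite Lsol_0 in Hds. cbn [fst snd] in Hds.
    pose proof (Rle_abs (b * fst (Lsol a b k t) + a * snd (Lsol a b k t) - (b * - k + a * 1))). unfold c0 in *. lra. }
  set (eta1 := Rmin (1/2) (Rmin (m/4) (c0 / (4 * (b - a))))).
  assert (He1 : 0 < eta1) by (unfold eta1; repeat apply Rmin_pos; try lra; apply Rdiv_lt_0_compat; lra).
  assert (He2 : eta1 <= 1/2) by apply Rmin_l.
  assert (He3 : eta1 <= m/4) by (unfold eta1; pose proof (Rmin_r (1/2) (Rmin (m/4) (c0 / (4 * (b - a))))); pose proof (Rmin_l (m/4) (c0 / (4 * (b - a)))); lra).
  assert (He4 : (b - a) * eta1 <= c0/4).
  { assert (eta1 <= c0 / (4 * (b - a))) by (unfold eta1; pose proof (Rmin_r (1/2) (Rmin (m/4) (c0 / (4 * (b - a))))); pose proof (Rmin_r (m/4) (c0 / (4 * (b - a)))); lra).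
    apply Rmult_le_compat_l with (r := b - a) in H; [|lra]. replace ((b - a) * (c0 / (4 * (b - a)))) with (c0 / 4) in H by (field; lra). lra. }
  set (E1 := exp (te0 + 1)).
  assert (HE1 : 1 <= E1). { unfold E1. rewrite <- exp_0 at 1. apply exp_le_mono. lra. }
  set (dl := Rmin 1 (Rmin (c0 / (8 * Rb)) (Rmin (c0 / (2 * (k + 1))) (eta1 / (3 * Rb * E1))))).
  assert (HRb : 0 < Rb) by (unfold Rb; lra).
  assert (Hdl : 0 < dl) by (unfold dl; repeat apply Rmin_pos; try lra; apply Rdiv_lt_0_compat; nra).
  assert (Hdl1 : dl <= 1) by apply Rmin_l.
  assert (Hdla : dl <= c0 / (8 * Rb)) by (unfold dl; pose proof (Rmin_r 1 (Rmin (c0 / (8 * Rb)) (Rmin (c0 / (2 * (k + 1))) (eta1 / (3 * Rb * E1))))); pose proof (Rmin_l (c0 / (8 * Rb)) (Rmin (c0 / (2 * (k + 1))) (eta1 / (3 * Rb * E1)))); lra).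
  assert (Hdlb : dl <= c0 / (2 * (k + 1))) by (unfold dl; pose proof (Rmin_r 1 (Rmin (c0 / (8 * Rb)) (Rmin (c0 / (2 * (k + 1))) (eta1 / (3 * Rb * E1))))); pose proof (Rmin_r (c0 / (8 * Rb)) (Rmin (c0 / (2 * (k + 1))) (eta1 / (3 * Rb * E1)))); pose proof (Rmin_l (c0 / (2 * (k + 1))) (eta1 / (3 * Rb * E1))); lra).
  assert (Hdlc : dl <= eta1 / (3 * Rb * E1)) by (unfold dl; pose proof (Rmin_r 1 (Rmin (c0 / (8 * Rb)) (Rmin (c0 / (2 * (k + 1))) (eta1 / (3 * Rb * E1))))); pose proof (Rmin_r (c0 / (8 * Rb)) (Rmin (c0 / (2 * (k + 1))) (eta1 / (3 * Rb * E1)))); pose proof (Rmin_r (c0 / (2 * (k + 1))) (eta1 / (3 * Rb * E1))); lra).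
  assert (Hdl2 : 2 * dl * (R0 + 2) <= c0/4).
  { fold Rb. apply Rmult_le_compat_l with (r := 2 * Rb) in Hdla; [|lra]. replace (2 * Rb * (c0 / (8 * Rb))) with (c0/4) in Hdla by (field; lra). lra. }
  assert (Hdl4 : dl * (k + 1) < c0).
  { apply Rmult_le_compat_l with (r := k + 1) in Hdlb; [|lra]. replace ((k + 1) * (c0 / (2 * (k + 1)))) with (c0/2) in Hdlb by (field; lra). lra. }
  assert (Hdl3 : 8 * (dl * dl) * ((R0+2) * (R0 + 2)) * exp (te0+1) <= eta1 * eta1).
  { fold Rb E1. assert (Hx : dl * (3 * Rb * E1) <= eta1).
    { apply Rmult_le_compat_r with (r := 3 * Rb * E1) in Hdlc; [|nra]. replace (eta1 / (3 * Rb * E1) * (3 * Rb * E1)) with eta1 in Hdlc by (field; lra). lra. }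
    assert (H3R : 0 <= 3 * Rb * E1) by (apply Rmult_le_pos; lra). assert (0 <= dl * (3 * Rb * E1)) by (apply Rmult_le_pos; lra).
    assert (dl * (3 * Rb * E1) * (dl * (3 * Rb * E1)) <= eta1 * eta1) by nra.
    assert (8 * (dl * dl) * (Rb * Rb) * E1 <= 9 * (dl * dl) * (Rb * Rb) * (E1 * E1)).
    { assert (0 <= dl * dl * (Rb * Rb) * E1) by (apply Rmult_le_pos; [|lra]; nra). nra. }
    nra. }
  destruct (M_lipB M HC2 H1 H2 H3 H4 dl Hdl) as [rho [Hrho HLr]].
  set (eps0 := rho / Rb).
  assert (Heps0 : 0 < eps0) by (unfold eps0; apply Rdiv_lt_0_compat; lra).
  set (gam := Rmin (1/2) (m/2)).
  assert (Hex : forall eps, exists zT : (R -> R*R) * R, 0 < eps < eps0 ->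
     ft_stable_cycle_one_impact a b k M eps (fst zT) (snd zT) /\ forall t, 0 <= t -> inbox (eps * (R0 + 1)) (fst zT t)).
  { intros eps. destruct (Rlt_dec 0 eps) as [Hp|Hn]; [destruct (Rlt_dec eps eps0) as [Hl|Hn]|].
    - assert (HL : LipB M (eps * (R0 + 2)) dl).
      { apply HLr. split. nra. fold Rb. unfold eps0 in Hl. apply Rmult_lt_compat_r with (r := Rb) in Hl; [|lra].
        replace (rho / Rb * Rb) with rho in Hl by (field; lra). lra. }
      destruct (per_eps a b k M R0 te0 t1 m c0 eta1 dl gam eps Ha Hb Hk HM0 eq_refl Ht1 Ht1e HLd
        ltac:(unfold m; ring) Hm Hc0 ltac:(unfold c0 in *; lra) He1 He2 He3 He4 Hdl Hdl1 Hdl2 Hdl3 Hdl4 eq_refl Hp HL) as [z [T [A B]]].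
      exists (z, T). intros _. split; auto.
    - exists (fun _ => (0,0), 1). intros [_ H]. lra.
    - exists (fun _ => (0,0), 1). intros [H _]. lra. }
  exists eps0. split; auto.
  exists (fun eps => fst (proj1_sig (constructive_indefinite_description _ (Hex eps)))).
  exists (fun eps => snd (proj1_sig (constructive_indefinite_description _ (Hex eps)))).
  split.
  - intros eps Heps. destruct (constructive_indefinite_description _ (Hex eps)) as [zT HzT]. simpl. apply HzT; auto.
  - intros eta Heta. exists (eta / (2 * (R0 + 1))). split. apply Rdiv_lt_0_compat; lra.
    intros eps t Heps Ht. destruct (constructive_indefinite_description _ (Hex eps)) as [zT HzT]. simpl.
    assert (Hel : eps < eps0) by (pose proof (Rmin_r (eta / (2 * (R0 + 1))) eps0); lra).
    assert (Hed : eps < eta / (2 * (R0 + 1))) by (pose proof (Rmin_l (eta / (2 * (R0 + 1))) eps0); lra).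
    destruct (HzT ltac:(lra)) as [_ B]. destruct (B t Ht) as [Bx By].
    unfold dist2. cbn [fst snd]. eapply Rle_lt_trans. apply sqrt_abs_bd.
    apply Rmult_lt_compat_r with (r := 2 * (R0 + 1)) in Hed; [|lra].
    replace (eta / (2 * (R0 + 1)) * (2 * (R0 + 1))) with eta in Hed by (field; lra). lra.
Qed.
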